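(* Let $a,b\in\mathbb{Z}^+$ with $a$ odd, and let $q$ be complex with $|q|<1$. If $b$ is even, then $$\sum_{n=0}^{\infty}N(a,3a,4b;8n+5a)q^n=4q^a\psi(q^a)\psi(q^{12a})\varphi(q^{b/2}),\qquad \sum_{n=0}^{\infty}N(a,3a,4b;8n+7a)q^n=4\psi(q^{3a})\psi(q^{4a})\varphi(q^{b/2}).$$ If $b$ is odd, then $$\begin{aligned}\sum_{n=0}^{\infty}N(a,3a,4b;8n)q^n&=\varphi(q^{2a})\varphi(q^{6a})\varphi(q^{2b})+4q^{2a}\psi(q^{4a})\psi(q^{12a})\varphi(q^{2b})\\&\quad+12q^{(a+b)/2}\big(\varphi(q^{6a})\psi(q^{4a})+q^a\varphi(q^{2a})\psi(q^{12a})\big)\psi(q^{4b}),\\ \sum_{n=0}^{\infty}N(a,3a,4b;8n+4)q^n&=2q^{(b-1)/2}\varphi(q^{2a})\varphi(q^{6a})\psi(q^{4b})+8q^{2a+(b-1)/2}\psi(q^{4a})\psi(q^{12a})\psi(q^{4b})\\&\quad+6q^{(a-1)/2}\big(\varphi(q^{6a})\psi(q^{4a})+q^a\varphi(q^{2a})\psi(q^{12a})\big)\varphi(q^{2b}).\end{aligned}$$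
   Context: $\mathbb{Z}^+$ is the set of positive integers. For $a,b,c\in\mathbb{Z}^+$ and nonnegative integer $n$, $N(a,b,c;n)$ denotes the number of triples $(x,y,z)\in\mathbb{Z}^3$ with $n=ax^2+by^2+cz^2$ (and $N(a,b,c;n)=0$ for negative $n$). Ramanujan's theta functions are $\varphi(q)=\sum_{n=-\infty}^{\infty}q^{n^2}$ and $\psi(q)=\sum_{n=0}^{\infty}q^{n(n+1)/2}$ for $|q|<1$. *)

(* Defs.v *)
From Stdlib Require Import Reals ZArith List Arith.
From Coquelicot Require Import Coquelicot.

(* Sum of a (convergent) complex series, taken componentwise:
   the real part is the sum of the real parts, the imaginary part the sum of
   the imaginary parts.  (A complex series converges iff both component
   series converge, and then its sum is this value.) *)
Definition CSeries (u : nat -> C) : C :=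
  (Series (fun n => fst (u n)), Series (fun n => snd (u n))).

(* Ramanujan's phi(q) = sum_{n in Z} q^(n^2) = 1 + 2 sum_{n>=1} q^(n^2)
   (the terms for n and -n coincide). *)
Definition rphi (q : C) : C :=
  CSeries (fun n => if Nat.eqb n 0 then RtoC 1 else Cmult (RtoC 2) (Cpow q (n * n))).

Definition rpsi (q : C) : C :=
  CSeries (fun n => Cpow q (n * (n + 1) / 2)).

Definition zrange (m : nat) : list Z :=
  map (fun k => (Z.of_nat k - Z.of_nat m)%Z) (seq 0 (2 * m + 1)).

(* N(a,b,c;n) = #{(x,y,z) in Z^3 | n = a x^2 + b y^2 + c z^2}.
   For a,b,c >= 1 (the only case used), every solution has |x|,|y|,|z| <= n
   (since |x| <= x^2 <= n), so counting over [-n,n]^3 counts all of Z^3. *)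
Definition Nrep (a b c n : nat) : nat :=
  length (filter
    (fun t : Z * Z * Z =>
       let '(x, y, z) := t in
       Z.eqb (Z.of_nat n)
             (Z.of_nat a * x * x + Z.of_nat b * y * y + Z.of_nat c * z * z)%Z)
    (list_prod (list_prod (zrange n) (zrange n)) (zrange n))).

(* Main.v *)
Require Import Defs.
From Stdlib Require Import Reals ZArith List Arith Lia Lra.
From Coquelicot Require Import Coquelicot.

Module MA.

Lemma sum_n_fst (u : nat -> C) n : fst (sum_n u n) = sum_n (fun k => fst (u k)) n.
Proof. induction n. - rewrite !sum_O; auto. - rewrite !sum_Sn, <- IHn. reflexivity. Qed.
Lemma sum_n_snd (u : nat -> C) n : snd (sum_n u n) = sum_n (fun k => snd (u k)) n.
Proof. induction n. - rewrite !sum_O; auto. - rewrite !sum_Sn, <- IHn. reflexivity. Qed.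

Lemma is_seriesC (u : nat -> C) l :
  is_series (fun n => fst (u n)) (fst l) -> is_series (fun n => snd (u n)) (snd l) -> is_series u l.
Proof.
  unfold is_series. intros H1 H2.
  apply filterlim_locally. intros eps.
  destruct (proj1 (filterlim_locally _ _) H1 eps) as [N1 H1'].
  destruct (proj1 (filterlim_locally _ _) H2 eps) as [N2 H2']. exists (max N1 N2). intros n Hn.
  split.
  - rewrite sum_n_fst. apply H1'. lia.
  - rewrite sum_n_snd. apply H2'. lia.
Qed.

Lemma is_seriesC_inv (u : nat -> C) l : is_series u l ->
  is_series (fun n => fst (u n)) (fst l) /\ is_series (fun n => snd (u n)) (snd l).
Proof.
  unfold is_series. intros H. split; apply filterlim_locally; intros eps;
  destruct (proj1 (filterlim_locally _ _) H eps) as [N H']; exists N; intros n Hn; destruct (H' n Hn) as [Ha Hb].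
  - rewrite <- sum_n_fst. exact Ha.
  - rewrite <- sum_n_snd. exact Hb.
Qed.

End MA.
Import MA.

Module MB.

Fixpoint natsum (f : nat -> nat) (n : nat) : nat :=
  match n with 0 => 0%nat | S n => (natsum f n + f n)%nat end.
Definition conv (c d : nat -> nat) (n : nat) : nat := natsum (fun k => (c k * d (n - k))%nat) (S n).

Definition good (c : nat -> nat) (q : C) (A : C) :=
  is_series (fun n => Cmult (RtoC (INR (c n))) (Cpow q n)) A /\
  ex_series (fun n => INR (c n) * Cmod q ^ n).

Lemma INR_natsum f n : INR (natsum f (S n)) = sum_f_R0 (fun k => INR (f k)) n.
Proof.
  induction n.
  - simpl. lra.
  - change (natsum f (S (S n))) with (natsum f (S n) + f (S n))%nat.
    rewrite plus_INR, IHn. reflexivity.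
Qed.

Lemma INR_conv c d n : INR (conv c d n) = sum_f_R0 (fun k => INR (c k) * INR (d (n - k)%nat)) n.
Proof.
  unfold conv. rewrite INR_natsum. apply sum_eq. intros. apply mult_INR.
Qed.

Lemma fst_Cpow_split (q : C) k n : (k <= n)%nat ->
  fst (q ^ n)%C = fst (q^k)%C * fst (q^(n-k))%C - snd (q^k)%C * snd (q^(n-k))%C.
Proof. intros H. replace n with (k + (n - k))%nat at 1 by lia. rewrite Cpow_add_r. simpl. ring. Qed.
Lemma snd_Cpow_split (q : C) k n : (k <= n)%nat ->
  snd (q ^ n)%C = fst (q^k)%C * snd (q^(n-k))%C + snd (q^k)%C * fst (q^(n-k))%C.
Proof. intros H. replace n with (k + (n - k))%nat at 1 by lia. rewrite Cpow_add_r. simpl. ring. Qed.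

Lemma abs_fst_le (z : C) : Rabs (fst z) <= Cmod z.
Proof. eapply Rle_trans; [|apply Rmax_Cmod]. apply Rmax_l. Qed.
Lemma abs_snd_le (z : C) : Rabs (snd z) <= Cmod z.
Proof. eapply Rle_trans; [|apply Rmax_Cmod]. apply Rmax_r. Qed.

Lemma exs_comp (c : nat -> nat) (q : C) (g : C -> R) :
  (forall z, Rabs (g z) <= Cmod z) ->
  ex_series (fun n => INR (c n) * Cmod q ^ n) ->
  ex_series (fun n => Rabs (INR (c n) * g (q ^ n)%C)).
Proof.
  intros Hg H. apply (@ex_series_le R_AbsRing R_CompleteNormedModule _ (fun n => INR (c n) * Cmod q ^ n)); auto.
  intros n. change norm with Rabs. simpl. rewrite Rabs_Rabsolu, Rabs_mult.
  rewrite Rabs_pos_eq by apply pos_INR. rewrite <- Cmod_pow.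
  apply Rmult_le_compat_l. apply pos_INR. apply Hg.
Qed.

Lemma good_conv c d q A B : good c q A -> good d q B -> good (conv c d) q (Cmult A B).
Proof.
  intros [HA HAa] [HB HBa].
  apply is_seriesC_inv in HA as [HA1 HA2]. apply is_seriesC_inv in HB as [HB1 HB2].
  set (ar := fun k => INR (c k) * fst (q^k)%C).
  set (ai := fun k => INR (c k) * snd (q^k)%C).
  set (br := fun k => INR (d k) * fst (q^k)%C).
  set (bi := fun k => INR (d k) * snd (q^k)%C).
  assert (Har : is_series ar (fst A)).
  { eapply is_series_ext; [|exact HA1]. intros n; simpl. unfold ar. ring. }
  assert (Hai : is_series ai (snd A)).
  { eapply is_series_ext; [|exact HA2]. intros n; simpl. unfold ai. ring. }
  assert (Hbr : is_series br (fst B)).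
  { eapply is_series_ext; [|exact HB1]. intros n; simpl. unfold br. ring. }
  assert (Hbi : is_series bi (snd B)).
  { eapply is_series_ext; [|exact HB2]. intros n; simpl. unfold bi. ring. }
  assert (Xar := exs_comp c q fst abs_fst_le HAa).
  assert (Xai := exs_comp c q snd abs_snd_le HAa).
  assert (Xbr := exs_comp d q fst abs_fst_le HBa).
  assert (Xbi := exs_comp d q snd abs_snd_le HBa).
  split.
  - apply is_seriesC.
    + pose proof (is_series_mult _ _ _ _ Har Hbr Xar Xbr) as M1.
      pose proof (is_series_mult _ _ _ _ Hai Hbi Xai Xbi) as M2.
      pose proof (is_series_minus _ _ _ _ M1 M2) as M.
      eapply is_series_ext; [|exact M].
      intros n. simpl. rewrite INR_conv. change (plus ?x (opp ?y)) with (x - y).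
      rewrite <- minus_sum. rewrite Rmult_0_l, Rminus_0_r, (Rmult_comm (sum_f_R0 _ n)), scal_sum.
      apply sum_eq. intros k Hk. unfold ar, br, ai, bi.
      rewrite (fst_Cpow_split q k n Hk). ring.
    + pose proof (is_series_mult _ _ _ _ Har Hbi Xar Xbi) as M1.
      pose proof (is_series_mult _ _ _ _ Hai Hbr Xai Xbr) as M2.
      pose proof (is_series_plus _ _ _ _ M1 M2) as M.
      eapply is_series_ext; [|exact M].
      intros n. simpl. rewrite INR_conv. change (plus ?x ?y) with (x + y).
      rewrite <- plus_sum. rewrite Rmult_0_l, ?Rplus_0_l, ?Rplus_0_r, (Rmult_comm (sum_f_R0 _ n)), scal_sum.
      apply sum_eq. intros k Hk. unfold ar, br, ai, bi.
      rewrite (snd_Cpow_split q k n Hk). ring.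
  - destruct HAa as [la Hla]. destruct HBa as [lb Hlb].
    assert (P := is_series_mult_pos _ _ _ _ Hla Hlb).
    eexists. eapply is_series_ext; [|apply P].
    + intros n. rewrite INR_conv, (Rmult_comm (sum_f_R0 _ n)), scal_sum. apply sum_eq.
      intros k Hk. assert (E : Cmod q ^ n = Cmod q ^ k * Cmod q ^ (n - k)).
      { rewrite <- pow_add. f_equal. lia. }
      rewrite E. ring.
    + intros n. apply Rmult_le_pos. apply pos_INR. apply pow_le, Cmod_ge_0.
    + intros n. apply Rmult_le_pos. apply pos_INR. apply pow_le, Cmod_ge_0.
Qed.

End MB.
Import MB.

Module MC.

Section Reindex.
Context {K : AbsRing} {V : NormedModule K}.
Variable e : nat -> nat.
Hypothesis He : forall n, (e n < e (S n))%nat.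

Lemma e_mono : forall i j, (i <= j)%nat -> (e i <= e j)%nat.
Proof. intros i j H. induction H. lia. specialize (He m). lia. Qed.
Lemma e_strict : forall i j, (i < j)%nat -> (e i < e j)%nat.
Proof. intros i j H. specialize (e_mono (S i) j H). specialize (He i). lia. Qed.
Lemma e_ge : forall n, (n + e 0 <= e n)%nat.
Proof. induction n. lia. specialize (He n). lia. Qed.

Variables a b : nat -> V.
Hypothesis Hb1 : forall n, b (e n) = a n.
Hypothesis Hb0 : forall m, (forall n, e n <> m) -> b m = zero.

Lemma claim1 : forall M, (M < e 0)%nat -> sum_n b M = zero.
Proof.
  induction M; intros H.
  - rewrite sum_O. apply Hb0. intros n. pose proof (e_mono 0 n). lia.
  - rewrite sum_Sn, IHM by lia. rewrite Hb0. apply plus_zero_l.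
    intros n. pose proof (e_mono 0 n). lia.
Qed.

Lemma claim2 : forall M n, (e n <= M < e (S n))%nat -> sum_n b M = sum_n a n.
Proof.
  induction M; intros n H.
  - assert (n = 0)%nat by (pose proof (e_ge n); lia). subst.
    rewrite !sum_O. replace 0%nat with (e 0) at 1 by lia. apply Hb1.
  - destruct (Nat.eq_dec (e n) (S M)) as [E|E].
    + destruct n as [|n'].
      * rewrite sum_Sn, claim1 by lia. rewrite plus_zero_l, sum_O, <- E. apply Hb1.
      * rewrite sum_Sn, (IHM n') by (specialize (He n'); lia).
        rewrite sum_Sn, <- E, Hb1. reflexivity.
    + rewrite sum_Sn, (IHM n) by lia. rewrite Hb0. apply plus_zero_r.
      intros j. destruct (le_lt_dec j n).
      * pose proof (e_mono j n). lia.
      * pose proof (e_mono (S n) j). lia.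
Qed.

Lemma claim3 : forall M, (e 0 <= M)%nat -> exists n, (e n <= M < e (S n))%nat.
Proof.
  induction M; intros H.
  - exists 0%nat. specialize (He 0). lia.
  - destruct (Nat.eq_dec (e 0) (S M)).
    + exists 0%nat. specialize (He 0). lia.
    + destruct IHM as [n0 Hn]. lia.
      destruct (Nat.eq_dec (e (S n0)) (S M)).
      * exists (S n0). specialize (He (S n0)). lia.
      * exists n0. lia.
Qed.

Lemma reindex L : is_series a L -> is_series b L.
Proof.
  unfold is_series. intros H. apply filterlim_locally. intros eps.
  destruct (proj1 (filterlim_locally _ _) H eps) as [N0 HN].
  exists (e N0). intros M HM.
  destruct (claim3 M) as [n Hn]. pose proof (e_mono 0 N0). lia.
  rewrite (claim2 M n Hn). apply HN.
  destruct (le_lt_dec N0 n) as [|Hl]; auto.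
  pose proof (e_mono (S n) N0 Hl). lia.
Qed.
End Reindex.

End MC.
Import MC.

Module MD.
Local Open Scope bool_scope.

Definition cnt {A} (P : A -> bool) (L : list A) : nat := length (filter P L).
Fixpoint lsum {A} (f : A -> nat) (L : list A) : nat :=
  match L with nil => 0%nat | a :: L => (f a + lsum f L)%nat end.

Lemma cnt_cons {A} (P : A -> bool) a L : cnt P (a :: L) = ((if P a then 1 else 0) + cnt P L)%nat.
Proof. unfold cnt; simpl. destruct (P a); reflexivity. Qed.

Lemma cnt_ext_in {A} (P Q : A -> bool) L : (forall x, In x L -> P x = Q x) -> cnt P L = cnt Q L.
Proof.
  induction L; intros H; auto. rewrite !cnt_cons, H, IHL; auto. intros; apply H; simpl; auto. simpl; auto.
Qed.

Lemma cnt_split {A} (P C : A -> bool) L :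
  cnt P L = (cnt (fun x => P x && C x) L + cnt (fun x => P x && negb (C x)) L)%nat.
Proof. induction L; auto. rewrite !cnt_cons, IHL. destruct (P a), (C a); simpl; lia. Qed.

Lemma cnt_false {A} (P : A -> bool) L : (forall x, In x L -> P x = false) -> cnt P L = 0%nat.
Proof. induction L; intros H; auto. rewrite cnt_cons, H, IHL; simpl; auto. intros; apply H; simpl; auto. Qed.

Lemma cnt_same {A} (P : A -> bool) L1 L2 : NoDup L1 -> NoDup L2 ->
  (forall x, P x = true -> In x L1) -> (forall x, P x = true -> In x L2) -> cnt P L1 = cnt P L2.
Proof.
  intros N1 N2 H1 H2. unfold cnt. apply Nat.le_antisymm; apply NoDup_incl_length;
  try (apply NoDup_filter; auto); intros x Hx; apply filter_In in Hx; apply filter_In; intuition.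
Qed.

Lemma cnt_le_inj {A B} (P : A -> bool) (Q : B -> bool) L1 L2 (f : A -> B) :
  NoDup L1 -> (forall y, Q y = true -> In y L2) ->
  (forall x, In x L1 -> P x = true -> Q (f x) = true) ->
  (forall x y, In x L1 -> In y L1 -> P x = true -> P y = true -> f x = f y -> x = y) ->
  (cnt P L1 <= cnt Q L2)%nat.
Proof.
  intros N1 HQ Hf Hi. unfold cnt. rewrite <- (length_map f).
  apply NoDup_incl_length.
  - apply NoDup_map_NoDup_ForallPairs. intros x y Hx Hy. apply filter_In in Hx, Hy.
    intros E; apply Hi; intuition.
    apply NoDup_filter; auto.
  - intros y Hy. apply in_map_iff in Hy as [x [<- Hx]]. apply filter_In in Hx.
    apply filter_In. split. apply HQ. apply Hf; intuition. apply Hf; intuition.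
Qed.

Lemma cnt_bij {A B} (P : A -> bool) (Q : B -> bool) L1 L2 (f : A -> B) (g : B -> A) :
  NoDup L1 -> NoDup L2 -> (forall x, P x = true -> In x L1) -> (forall y, Q y = true -> In y L2) ->
  (forall x, P x = true -> Q (f x) = true) ->
  (forall y, Q y = true -> P (g y) = true) ->
  (forall x y, P x = true -> P y = true -> f x = f y -> x = y) ->
  (forall x y, Q x = true -> Q y = true -> g x = g y -> x = y) ->
  cnt P L1 = cnt Q L2.
Proof.
  intros. apply Nat.le_antisymm.
  - apply (cnt_le_inj P Q L1 L2 f); auto.
  - apply (cnt_le_inj Q P L2 L1 g); auto.
Qed.

Lemma cnt_map {A B} (P : B -> bool) (g : A -> B) L : cnt P (map g L) = cnt (fun x => P (g x)) L.
Proof. induction L; auto. simpl map. rewrite !cnt_cons, IHL. reflexivity. Qed.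

Lemma cnt_app {A} (P : A -> bool) L1 L2 : cnt P (L1 ++ L2) = (cnt P L1 + cnt P L2)%nat.
Proof. unfold cnt. rewrite filter_app, length_app. auto. Qed.

Lemma cnt_prod {A B} (R : A -> B -> bool) L1 L2 :
  cnt (fun p => R (fst p) (snd p)) (list_prod L1 L2) = lsum (fun a => cnt (R a) L2) L1.
Proof.
  induction L1; auto. simpl list_prod. rewrite cnt_app, cnt_map, IHL1. reflexivity.
Qed.

Lemma NoDup_prod {A B} (L1 : list A) (L2 : list B) : NoDup L1 -> NoDup L2 -> NoDup (list_prod L1 L2).
Proof.
  intros N1 N2. induction N1 as [|a L1 Ha N1 IH]; simpl. constructor.
  apply NoDup_app; auto.
  - apply NoDup_map_NoDup_ForallPairs; auto. intros x y _ _ E. inversion E; auto.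
  - intros [x y] H1 H2. apply in_map_iff in H1 as [y' [E _]]. inversion E; subst.
    apply in_prod_iff in H2. tauto.
Qed.

Lemma in_zrange x m : In x (zrange m) <-> (- Z.of_nat m <= x <= Z.of_nat m)%Z.
Proof.
  unfold zrange. rewrite in_map_iff. split.
  - intros [k [<- Hk]]. apply in_seq in Hk. lia.
  - intros H. exists (Z.to_nat (x + Z.of_nat m)). split. lia. apply in_seq. lia.
Qed.

Lemma NoDup_zrange m : NoDup (zrange m).
Proof.
  unfold zrange. apply NoDup_map_NoDup_ForallPairs. intros x y _ _ E. lia. apply seq_NoDup.
Qed.

Lemma natsum_ext f g N : (forall k, (k < N)%nat -> f k = g k) -> natsum f N = natsum g N.
Proof. induction N; intros H; simpl; auto. rewrite IHN, H; auto. Qed.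
Lemma natsum_add f g N : natsum (fun k => (f k + g k)%nat) N = (natsum f N + natsum g N)%nat.
Proof. induction N; simpl; auto. rewrite IHN. lia. Qed.
Lemma natsum_zero N : natsum (fun _ => 0%nat) N = 0%nat.
Proof. induction N; simpl; auto. rewrite IHN; auto. Qed.
Lemma natsum_delta (e : nat) h N :
  natsum (fun k => if Nat.eqb e k then h k else 0%nat) N = if Nat.ltb e N then h e else 0%nat.
Proof.
  induction N; simpl; auto. rewrite IHN.
  destruct (Nat.eqb_spec e N); destruct (Nat.ltb_spec e N); destruct (Nat.ltb_spec e (S N)); subst; try lia.
Qed.

Lemma lsum_ext {A} (f g : A -> nat) L : (forall a, f a = g a) -> lsum f L = lsum g L.
Proof. intros H; induction L; simpl; auto. Qed.

Section Conv.
Context {A B : Type} (pA : A -> bool) (eA : A -> Z) (pB : B -> bool) (eB : B -> Z)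
  (LA : list A) (LB : list B) (cA cB : nat -> nat) (n : nat).
Hypothesis hA : forall m, (m <= n)%nat -> cA m = cnt (fun a => pA a && Z.eqb (eA a) (Z.of_nat m)) LA.
Hypothesis hB : forall m, (m <= n)%nat -> cB m = cnt (fun b => pB b && Z.eqb (eB b) (Z.of_nat m)) LB.
Hypothesis pA0 : forall a, pA a = true -> (0 <= eA a)%Z.
Hypothesis pB0 : forall b, pB b = true -> (0 <= eB b)%Z.

Let g a := if pA a && Z.leb (eA a) (Z.of_nat n) then cB (n - Z.to_nat (eA a))%nat else 0%nat.

Lemma conv_inner a : cnt (fun b => pA a && pB b && Z.eqb (eA a + eB b) (Z.of_nat n)) LB = g a.
Proof.
  unfold g. destruct (pA a) eqn:Ha; simpl.
  - destruct (Z.leb_spec (eA a) (Z.of_nat n)).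
    + rewrite hB by lia. apply cnt_ext_in. intros b _. destruct (pB b) eqn:Hb; auto.
      simpl. pose proof (pA0 a Ha). destruct (Z.eqb_spec (eA a + eB b) (Z.of_nat n)), (Z.eqb_spec (eB b) (Z.of_nat (n - Z.to_nat (eA a)))); auto; lia.
    + apply cnt_false. intros b _. destruct (pB b) eqn:Hb; auto.
      simpl. pose proof (pB0 b Hb). apply Z.eqb_neq. lia.
  - apply cnt_false; auto.
Qed.

Lemma conv_outer L :
  natsum (fun k => (cnt (fun a => pA a && Z.eqb (eA a) (Z.of_nat k)) L * cB (n - k))%nat) (S n) = lsum g L.
Proof.
  induction L as [|a L IH]; simpl lsum.
  - apply natsum_zero.
  - rewrite <- IH. erewrite natsum_ext; [|intros k _; rewrite cnt_cons, Nat.mul_add_distr_r; reflexivity].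
    rewrite natsum_add. f_equal.
    unfold g. destruct (pA a) eqn:Ha; cbn [andb].
    + pose proof (pA0 a Ha).
      rewrite (natsum_ext _ (fun k => if Nat.eqb (Z.to_nat (eA a)) k then cB (n - k)%nat else 0%nat)).
      * rewrite natsum_delta. destruct (Nat.ltb_spec (Z.to_nat (eA a)) (S n)); destruct (Z.leb_spec (eA a) (Z.of_nat n)); auto; lia.
      * intros k _. destruct (Z.eqb_spec (eA a) (Z.of_nat k)); destruct (Nat.eqb_spec (Z.to_nat (eA a)) k); try lia.
    + rewrite (natsum_ext _ (fun _ => 0%nat)); [apply natsum_zero| intros; lia].
Qed.

Lemma conv_count :
  conv cA cB n = cnt (fun p => pA (fst p) && pB (snd p) && Z.eqb (eA (fst p) + eB (snd p)) (Z.of_nat n))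
                   (list_prod LA LB).
Proof.
  unfold conv. rewrite (cnt_prod (fun a b => pA a && pB b && Z.eqb (eA a + eB b) (Z.of_nat n))).
  rewrite (lsum_ext _ g) by (intros; apply conv_inner).
  rewrite <- conv_outer. apply natsum_ext. intros k Hk. rewrite hA by lia. reflexivity.
Qed.
End Conv.

Definition fcoef (P : Z -> bool) (E : Z -> Z) (m : nat) : nat :=
  cnt (fun x => P x && Z.eqb (E x) (Z.of_nat m)) (zrange (8*m+1)).
Definition validF (P : Z -> bool) (E : Z -> Z) :=
  forall x, P x = true -> (0 <= E x /\ Z.abs x <= 8 * E x + 1)%Z.

Lemma fcoef_stable P E n m : validF P E -> (m <= n)%nat ->
  fcoef P E m = cnt (fun x => P x && Z.eqb (E x) (Z.of_nat m)) (zrange (8*n+1)).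
Proof.
  intros V Hm. unfold fcoef. apply cnt_same; try apply NoDup_zrange;
  intros x Hx; apply andb_prop in Hx as [H1 H2]; apply Z.eqb_eq in H2; apply V in H1;
  apply in_zrange; lia.
Qed.

Definition L3 n := zrange (8*n+1).
Definition T3 P1 E1 P2 E2 P3 E3 (n : nat) :=
  cnt (fun p : Z * (Z * Z) => P1 (fst p) && (P2 (fst (snd p)) && P3 (snd (snd p))) &&
          Z.eqb (E1 (fst p) + (E2 (fst (snd p)) + E3 (snd (snd p))))%Z (Z.of_nat n))
      (list_prod (L3 n) (list_prod (L3 n) (L3 n))).

Lemma conv3 P1 E1 P2 E2 P3 E3 n : validF P1 E1 -> validF P2 E2 -> validF P3 E3 ->
  conv (fcoef P1 E1) (conv (fcoef P2 E2) (fcoef P3 E3)) n = T3 P1 E1 P2 E2 P3 E3 n.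
Proof.
  intros V1 V2 V3. unfold T3.
  apply (conv_count P1 E1 (fun p => P2 (fst p) && P3 (snd p)) (fun p => E2 (fst p) + E3 (snd p))%Z).
  - intros m Hm. apply fcoef_stable; auto.
  - intros m Hm.
    rewrite (conv_count P2 E2 P3 E3 (L3 m) (L3 m)).
    + apply cnt_same; try (apply NoDup_prod; apply NoDup_zrange).
      * intros [y z] H. apply andb_prop in H as [H H3]. apply andb_prop in H as [H1 H2].
        apply Z.eqb_eq in H3. simpl in *. apply V2 in H1. apply V3 in H2. apply in_prod_iff.
        unfold L3. rewrite !in_zrange. lia.
      * intros [y z] H. apply andb_prop in H as [H H3]. apply andb_prop in H as [H1 H2].
        apply Z.eqb_eq in H3. simpl in *. apply V2 in H1. apply V3 in H2. apply in_prod_iff.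
        unfold L3. rewrite !in_zrange. lia.
    + intros; apply fcoef_stable; auto.
    + intros; apply fcoef_stable; auto.
    + intros x H; apply V2; auto.
    + intros x H; apply V3; auto.
  - intros x H; apply V1; auto.
  - intros [y z] H. simpl in *. apply andb_prop in H as [H1 H2]. apply V2 in H1. apply V3 in H2. lia.
Qed.

End MD.
Import MD.

Module ME.
Local Open Scope bool_scope.

Lemma good_ext c d q A : (forall n, c n = d n) -> good c q A -> good d q A.
Proof.
  intros H [H1 H2]. split.
  - eapply is_series_ext; [|exact H1]. intros n; simpl. rewrite H. reflexivity.
  - eapply ex_series_ext; [|exact H2]. intros n; simpl. rewrite H. reflexivity.
Qed.

Lemma good_val c q A B : A = B -> good c q A -> good c q B.
Proof. intros ->; auto. Qed.

Lemma good_plus c d q A B : good c q A -> good d q B -> good (fun n => (c n + d n)%nat) q (Cplus A B).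
Proof.
  intros [H1 H2] [H3 H4]. split.
  - pose proof (is_series_plus _ _ _ _ H1 H3) as P. eapply is_series_ext; [|exact P].
    intros n. simpl. rewrite plus_INR, RtoC_plus. change plus with Cplus. ring.
  - pose proof (ex_series_plus _ _ H2 H4) as P. eapply ex_series_ext; [|exact P].
    intros n. simpl. rewrite plus_INR. change plus with Rplus. ring.
Qed.

Lemma good_scale k c q A : good c q A -> good (fun n => (k * c n)%nat) q (Cmult (RtoC (INR k)) A).
Proof.
  intros [H1 H2]. split.
  - pose proof (is_series_scal_l (RtoC (INR k)) _ _ H1) as P. eapply is_series_ext; [|exact P].
    intros n. simpl. rewrite mult_INR, RtoC_mult. change scal with Cmult. ring.
  - pose proof (ex_series_scal_l (INR k) _ H2) as P. eapply ex_series_ext; [|exact P].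
    intros n. simpl. rewrite mult_INR. change scal with Rmult. ring.
Qed.

Lemma pow_le_decr r m n : 0 <= r <= 1 -> (m <= n)%nat -> r ^ n <= r ^ m.
Proof.
  intros Hr H. replace n with (m + (n - m))%nat by lia. rewrite pow_add.
  rewrite <- (Rmult_1_r (r ^ m)) at 2. apply Rmult_le_compat_l. apply pow_le; lra.
  rewrite <- (pow1 (n - m)). apply pow_incr. lra.
Qed.

Lemma ex_geom2 r : 0 <= r < 1 -> ex_series (fun n => 2 * r ^ n).
Proof.
  intros Hr. eexists. apply (@is_series_scal_l R_AbsRing R_NormedModule 2 (fun n => r ^ n)).
  apply is_series_geom. rewrite Rabs_pos_eq; lra.
Qed.

Lemma CSeries_ok (t : nat -> C) r : 0 <= r < 1 -> (forall n, Cmod (t n) <= 2 * r ^ n) ->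
  is_series t (CSeries t).
Proof.
  intros Hr H. apply is_seriesC; simpl; apply Series_correct.
  - apply (@ex_series_le R_AbsRing R_CompleteNormedModule _ (fun n => 2 * r ^ n)); [|apply ex_geom2; auto].
    intros n. eapply Rle_trans; [apply abs_fst_le|apply H].
  - apply (@ex_series_le R_AbsRing R_CompleteNormedModule _ (fun n => 2 * r ^ n)); [|apply ex_geom2; auto].
    intros n. eapply Rle_trans; [apply abs_snd_le|apply H].
Qed.

Section ThetaGood.
Variables (e w c : nat -> nat) (q : C) (V : C).
Hypothesis Hq : Cmod q < 1.
Hypothesis He : forall n, (e n < e (S n))%nat.
Hypothesis Hen : forall n, (n <= e n)%nat.
Hypothesis Hw : forall n, (w n <= 2)%nat.
Hypothesis Hc1 : forall n, c (e n) = w n.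
Hypothesis Hc0 : forall m, (forall n, e n <> m) -> c m = 0%nat.
Hypothesis HV : is_series (fun n => Cmult (RtoC (INR (w n))) (Cpow q (e n))) V.

Lemma theta_good : good c q V.
Proof.
  split.
  - apply (reindex e He (fun n => Cmult (RtoC (INR (w n))) (Cpow q (e n)))); auto.
    + intros n. rewrite Hc1. reflexivity.
    + intros m Hm. rewrite Hc0 by auto. simpl. change (zero : C) with (RtoC 0). ring.
  - set (r := Cmod q). assert (Hr : 0 <= r < 1) by (split; [apply Cmod_ge_0|auto]).
    assert (Ha : ex_series (fun n => INR (w n) * r ^ (e n))).
    { apply (@ex_series_le R_AbsRing R_CompleteNormedModule _ (fun n => 2 * r ^ n)); [|apply ex_geom2; auto].
      intros n. change norm with Rabs. simpl. rewrite Rabs_pos_eq.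
      2:{ apply Rmult_le_pos. apply pos_INR. apply pow_le; lra. }
      apply Rmult_le_compat. apply pos_INR. apply pow_le; lra.
      replace 2 with (INR 2) by (simpl; lra). apply le_INR; auto.
      apply pow_le_decr; auto; lra. }
    destruct Ha as [l Hl]. exists l.
    apply (reindex e He (fun n => INR (w n) * r ^ (e n))); auto.
    + intros n. rewrite Hc1. reflexivity.
    + intros m Hm. rewrite Hc0 by auto. simpl. change (zero : R) with 0. ring.
Qed.
End ThetaGood.

Lemma cnt_pm (P : Z -> bool) c R : (0 < c <= Z.of_nat R)%Z ->
  (forall x, P x = true <-> x = c \/ x = (- c)%Z) -> cnt P (zrange R) = 2%nat.
Proof.
  intros Hc HP. rewrite (cnt_same P (zrange R) (c :: (- c)%Z :: nil)).
  - rewrite !cnt_cons. assert (P c = true) by (apply HP; auto).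
    assert (P (- c)%Z = true) by (apply HP; auto). rewrite H, H0. reflexivity.
  - apply NoDup_zrange.
  - constructor. intros [H|[]]; lia. constructor; auto. constructor.
  - intros x Hx. apply HP in Hx. apply in_zrange. lia.
  - intros x Hx. apply HP in Hx. simpl. intuition.
Qed.

Lemma cnt_one (P : Z -> bool) c R : (Z.abs c <= Z.of_nat R)%Z ->
  (forall x, P x = true <-> x = c) -> cnt P (zrange R) = 1%nat.
Proof.
  intros Hc HP. rewrite (cnt_same P (zrange R) (c :: nil)).
  - rewrite !cnt_cons. assert (P c = true) by (apply HP; auto). rewrite H. reflexivity.
  - apply NoDup_zrange.
  - constructor. intros []. constructor.
  - intros x Hx. apply HP in Hx. apply in_zrange. lia.
  - intros x Hx. apply HP in Hx. simpl. intuition.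
Qed.

Lemma tri_eq n : (2 * (n * (n + 1) / 2) = n * (n + 1))%nat.
Proof.
  destruct (Nat.Even_or_Odd n) as [[t Ht]|[t Ht]]; subst.
  - replace (2 * t * (2 * t + 1))%nat with ((t * (2 * t + 1)) * 2)%nat by ring.
    rewrite Nat.div_mul by lia. ring.
  - replace ((2 * t + 1) * (2 * t + 1 + 1))%nat with (((2 * t + 1) * (t + 1)) * 2)%nat by ring.
    rewrite Nat.div_mul by lia. ring.
Qed.

Definition Pphi (x : Z) := true.
Definition Ephi (k s : nat) (x : Z) := (Z.of_nat s + Z.of_nat k * (x * x))%Z.
Definition Ppsi (x : Z) := Z.eqb (x mod 2) 1.
Definition Epsi (k s : nat) (x : Z) := (Z.of_nat s + Z.of_nat k * ((x * x - 1) / 8))%Z.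

Lemma odd_sq_div x : Ppsi x = true -> (8 * ((x * x - 1) / 8) = x * x - 1)%Z.
Proof.
  unfold Ppsi. intros H. apply Z.eqb_eq in H.
  assert (Hx := Z.div_mod x 2 ltac:(lia)). set (t := (x / 2)%Z) in *.
  assert (Ht := Z.div_mod t 2 ltac:(lia)). set (u := (t / 2)%Z) in *.
  assert (0 <= t mod 2 < 2)%Z by (apply Z.mod_pos_bound; lia).
  assert (E : (x * x - 1 = 8 * ((t * t + t) / 2))%Z).
  { assert (t mod 2 = 0 \/ t mod 2 = 1)%Z as [E|E] by lia;
    rewrite E in Ht;
    [replace (t * t + t)%Z with ((2*u*u + u) * 2)%Z by nia | replace (t * t + t)%Z with ((2*u*u+3*u+1) * 2)%Z by nia];
    rewrite Z.div_mul by lia; nia. }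
  rewrite E. rewrite (Z.mul_comm 8 ((t * t + t) / 2)), Z.div_mul by lia. ring.
Qed.

Lemma valid_phi k s : (1 <= k)%nat -> validF Pphi (Ephi k s).
Proof. intros Hk x _. unfold Ephi. split; nia. Qed.

Lemma valid_psi k s : (1 <= k)%nat -> validF Ppsi (Epsi k s).
Proof.
  intros Hk x Hx. pose proof (odd_sq_div x Hx). unfold Epsi.
  assert (0 <= (x * x - 1) / 8)%Z by nia. split; nia.
Qed.

Lemma sq_eq_pm (x c : Z) : (x * x = c * c)%Z -> x = c \/ x = (- c)%Z.
Proof.
  intros H. assert ((x - c) * (x + c) = 0)%Z by nia. apply Z.mul_eq_0 in H0. lia.
Qed.

Lemma RtoC_INR2 : RtoC (INR 2) = RtoC 2.
Proof. simpl. f_equal. Qed.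

Section Gphi.
Variables (k s : nat) (q : C).
Hypothesis Hk : (1 <= k)%nat.
Hypothesis Hq : Cmod q < 1.

Lemma gphi : good (fcoef Pphi (Ephi k s)) q (Cmult (Cpow q s) (rphi (Cpow q k))).
Proof.
  apply (theta_good (fun n => s + k * (n * n))%nat (fun n => if Nat.eqb n 0 then 1%nat else 2%nat)); auto.
  - intros n. nia.
  - intros n. nia.
  - intros n. destruct (Nat.eqb n 0); lia.
  - intros n. unfold fcoef. destruct (Nat.eqb_spec n 0).
    + subst. apply (cnt_one _ 0). lia. intros x. unfold Pphi, Ephi. simpl andb.
      rewrite Z.eqb_eq. split; intros H. nia. subst. lia.
    + apply (cnt_pm _ (Z.of_nat n)). nia. intros x. unfold Pphi, Ephi. simpl andb.
      rewrite Z.eqb_eq. split; intros H.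
      * apply sq_eq_pm. nia.
      * destruct H; subst; nia.
  - intros m Hm. unfold fcoef. apply cnt_false. intros x _. unfold Pphi, Ephi. simpl andb.
    apply Z.eqb_neq. intros E. apply (Hm (Z.to_nat (Z.abs x))). nia.
  - set (t := fun n => if Nat.eqb n 0 then RtoC 1 else Cmult (RtoC 2) (Cpow (Cpow q k) (n * n))).
    assert (Ht : is_series t (rphi (Cpow q k))).
    { apply (CSeries_ok t (Cmod q)). split; [apply Cmod_ge_0|auto].
      intros n. unfold t. destruct (Nat.eqb_spec n 0).
      - subst. rewrite Cmod_1. simpl. lra.
      - rewrite Cmod_mult, Cmod_R, !Cmod_pow, <- pow_mult, Rabs_pos_eq by lra.
        apply Rmult_le_compat_l. lra. apply pow_le_decr. split; [apply Cmod_ge_0|lra]. nia. }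
    pose proof (is_series_scal_l (Cpow q s) _ _ Ht) as P.
    eapply is_series_ext; [|exact P]. intros n. unfold t. change scal with Cmult.
    destruct n as [|n'].
    + replace (s + k * (0 * 0))%nat with s by lia. simpl. change (?x = ?y) with (@eq C x y). ring.
    + cbn [Nat.eqb]. rewrite RtoC_INR2, Cpow_add_r, (Cpow_mult_r q k). change (?x = ?y) with (@eq C x y). ring.
Qed.
End Gphi.

Section Gpsi.
Variables (k s : nat) (q : C).
Hypothesis Hk : (1 <= k)%nat.
Hypothesis Hq : Cmod q < 1.

Lemma gpsi : good (fcoef Ppsi (Epsi k s)) q (Cmult (RtoC 2) (Cmult (Cpow q s) (rpsi (Cpow q k)))).
Proof.
  apply (theta_good (fun n => s + k * (n * (n + 1) / 2))%nat (fun n => 2%nat)); auto.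
  - intros n. pose proof (tri_eq n). pose proof (tri_eq (S n)). nia.
  - intros n. pose proof (tri_eq n). nia.
  - intros n. unfold fcoef. pose proof (tri_eq n). set (T := (n * (n + 1) / 2)%nat) in *.
    apply (cnt_pm _ (2 * Z.of_nat n + 1)). nia. intros x. unfold Ppsi, Epsi.
    rewrite Bool.andb_true_iff, !Z.eqb_eq. split.
    + intros [H1 H2]. assert (Hd := odd_sq_div x). unfold Ppsi in Hd. rewrite Z.eqb_eq in Hd.
      specialize (Hd H1). apply sq_eq_pm. nia.
    + intros Hx. assert (x mod 2 = 1)%Z by (destruct Hx; subst; Z.to_euclidean_division_equations; lia).
      split; auto. assert (Hd := odd_sq_div x). unfold Ppsi in Hd. rewrite Z.eqb_eq in Hd.
      specialize (Hd H0). destruct Hx; subst; nia.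
  - intros m Hm. unfold fcoef. apply cnt_false. intros x _. unfold Ppsi, Epsi.
    destruct (Z.eqb_spec (x mod 2) 1) as [Ho|Ho]; auto. simpl andb.
    apply Z.eqb_neq. intros E.
    assert (Hd := odd_sq_div x). unfold Ppsi in Hd. rewrite Z.eqb_eq in Hd. specialize (Hd Ho).
    assert (Ha : (Z.abs x = 2 * (Z.abs x / 2) + 1)%Z).
    { destruct (Z.abs_spec x) as [[_ E1]|[_ E1]]; rewrite E1; Z.to_euclidean_division_equations; lia. }
    set (n := Z.to_nat (Z.abs x / 2)%Z).
    assert (Hn : (Z.abs x = 2 * Z.of_nat n + 1)%Z).
    { unfold n. rewrite Z2Nat.id. exact Ha. apply Z.div_pos; lia. }
    apply (Hm n). pose proof (tri_eq n). set (T := (n * (n + 1) / 2)%nat) in *.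
    assert (x * x = (2 * Z.of_nat n + 1) * (2 * Z.of_nat n + 1))%Z.
    { rewrite <- Hn. destruct (Z.abs_spec x) as [[_ ->]|[_ ->]]; ring. }
    nia.
  - set (t := fun n => Cpow (Cpow q k) (n * (n + 1) / 2)).
    assert (Ht : is_series t (rpsi (Cpow q k))).
    { apply (CSeries_ok t (Cmod q)). split; [apply Cmod_ge_0|auto].
      intros n. unfold t. rewrite !Cmod_pow, <- pow_mult.
      apply Rle_trans with (Cmod q ^ n).
      - apply pow_le_decr. split; [apply Cmod_ge_0|lra]. pose proof (tri_eq n). nia.
      - assert (0 <= Cmod q ^ n) by (apply pow_le, Cmod_ge_0). lra. }
    pose proof (is_series_scal_l (Cmult (RtoC 2) (Cpow q s)) _ _ Ht) as P.
    replace (Cmult (RtoC 2) (Cmult (Cpow q s) (rpsi (Cpow q k)))) with (scal (Cmult (RtoC 2) (Cpow q s)) (rpsi (Cpow q k)))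
      by (change scal with Cmult; change (?x = ?y) with (@eq C x y); ring).
    eapply is_series_ext; [|exact P]. intros n. unfold t. change scal with Cmult.
    rewrite RtoC_INR2, Cpow_add_r, (Cpow_mult_r q k). change (?x = ?y) with (@eq C x y). ring.
Qed.
End Gpsi.

End ME.
Import ME.

Module MF.
Local Open Scope bool_scope.
Local Open Scope Z_scope.

Lemma decomp x y z a b : exists S,
  a*(x*x) + 3*a*(y*y) + 4*b*(z*z) =
  8*S + a*((x mod 4)*(x mod 4) + 3*((y mod 4)*(y mod 4))) + 4*b*((z mod 2)*(z mod 2)).
Proof.
  pose proof (Z.div_mod x 4 ltac:(lia)). pose proof (Z.div_mod y 4 ltac:(lia)).
  pose proof (Z.div_mod z 2 ltac:(lia)).
  set (i := x mod 4) in *. set (j := y mod 4) in *. set (l := z mod 2) in *.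
  set (x1 := x / 4) in *. set (y1 := y / 4) in *. set (z1 := z / 2) in *.
  exists (a*(2*x1*x1 + i*x1) + 3*a*(2*y1*y1 + j*y1) + b*(2*z1*z1 + 2*l*z1)).
  rewrite H, H0, H1. ring.
Qed.

Ltac resid x y z :=
  let Hi := fresh in let Hj := fresh in let Hl := fresh in
  assert (Hi : x mod 4 = 0 \/ x mod 4 = 1 \/ x mod 4 = 2 \/ x mod 4 = 3) by
    (pose proof (Z.mod_pos_bound x 4 ltac:(lia)); lia);
  assert (Hj : y mod 4 = 0 \/ y mod 4 = 1 \/ y mod 4 = 2 \/ y mod 4 = 3) by
    (pose proof (Z.mod_pos_bound y 4 ltac:(lia)); lia);
  assert (Hl : z mod 2 = 0 \/ z mod 2 = 1) by
    (pose proof (Z.mod_pos_bound z 2 ltac:(lia)); lia);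
  destruct Hi as [Hi|[Hi|[Hi|Hi]]]; destruct Hj as [Hj|[Hj|[Hj|Hj]]]; destruct Hl as [Hl|Hl];
  rewrite ?Hi, ?Hj, ?Hl.

Lemma class_E1 x y z a1 c n S :
  8 * n + 5 * (2*a1+1) = 8*S + (2*a1+1)*((x mod 4)*(x mod 4) + 3*((y mod 4)*(y mod 4))) + 4*(2*c)*((z mod 2)*(z mod 2)) ->
  (x mod 4 = 1 \/ x mod 4 = 3) /\ y mod 4 = 2.
Proof.
  intros Heq. revert Heq. resid x y z; intros Heq; lia.
Qed.

Definition NL (M : nat) := list_prod (list_prod (zrange M) (zrange M)) (zrange M).
Definition NP (a b c M : nat) (t : Z * Z * Z) :=
  Z.eqb (Z.of_nat M) (Z.of_nat a * fst (fst t) * fst (fst t) + Z.of_nat b * snd (fst t) * snd (fst t)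
                      + Z.of_nat c * snd t * snd t).

Lemma Nrep_cnt a b c M : Nrep a b c M = cnt (NP a b c M) (NL M).
Proof. unfold Nrep, cnt. f_equal. apply filter_ext. intros [[x y] z]. reflexivity. Qed.

Lemma NoDup_NL M : NoDup (NL M).
Proof. unfold NL. repeat apply NoDup_prod; apply NoDup_zrange. Qed.

Lemma NL_in a b c M t : (1 <= a)%nat -> (1 <= b)%nat -> (1 <= c)%nat -> NP a b c M t = true -> In t (NL M).
Proof.
  destruct t as [[x y] z]. unfold NP, NL. simpl. intros Ha Hb Hc H. apply Z.eqb_eq in H.
  rewrite !in_prod_iff, !in_zrange. nia.
Qed.

Definition L3l n := list_prod (L3 n) (list_prod (L3 n) (L3 n)).
Lemma NoDup_L3l n : NoDup (L3l n).
Proof. unfold L3l, L3. repeat apply NoDup_prod; apply NoDup_zrange. Qed.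

Definition T3P P1 E1 P2 E2 P3 E3 (n : nat) :=
  fun p : Z * (Z * Z) => P1 (fst p) && (P2 (fst (snd p)) && P3 (snd (snd p))) &&
          Z.eqb (E1 (fst p) + (E2 (fst (snd p)) + E3 (snd (snd p))))%Z (Z.of_nat n).

Lemma T3_unfold P1 E1 P2 E2 P3 E3 n : T3 P1 E1 P2 E2 P3 E3 n = cnt (T3P P1 E1 P2 E2 P3 E3 n) (L3l n).
Proof. reflexivity. Qed.

Lemma T3_in P1 E1 P2 E2 P3 E3 n p : validF P1 E1 -> validF P2 E2 -> validF P3 E3 ->
  T3P P1 E1 P2 E2 P3 E3 n p = true -> In p (L3l n).
Proof.
  destruct p as [x [y z]]. unfold T3P, L3l, L3. simpl. intros V1 V2 V3 H.
  apply andb_prop in H as [H H4]. apply andb_prop in H as [H1 H]. apply andb_prop in H as [H2 H3].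
  apply Z.eqb_eq in H4. apply V1 in H1. apply V2 in H2. apply V3 in H3.
  rewrite !in_prod_iff, !in_zrange. lia.
Qed.

Ltac bexpand :=
  repeat match goal with
  | H : (_ && _) = true |- _ => apply andb_prop in H as [? ?]
  | H : Z.eqb _ _ = true |- _ => apply Z.eqb_eq in H
  | H : Ppsi _ = true |- _ => unfold Ppsi in H
  | H : Pphi _ = true |- _ => clear H
  end.

Ltac zcast := repeat rewrite ?Nat2Z.inj_mul, ?Nat2Z.inj_add in *.

Lemma NP_eq a b c M x y z : NP a b c M (x, y, z) = true ->
  Z.of_nat M = Z.of_nat a * (x * x) + Z.of_nat b * (y * y) + Z.of_nat c * (z * z).
Proof. unfold NP. simpl. intros H. apply Z.eqb_eq in H. rewrite H. ring. Qed.

Lemma E1_class a b a1 c n x y z : a = (2*a1+1)%nat -> b = (2*c)%nat ->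
  NP a (3*a) (4*b) (8*n + 5*a) (x, y, z) = true -> (x mod 4 = 1 \/ x mod 4 = 3) /\ y mod 4 = 2.
Proof.
  intros Ha Hb H. apply NP_eq in H.
  destruct (decomp x y z (Z.of_nat a) (Z.of_nat b)) as [S HS].
  apply (class_E1 x y z (Z.of_nat a1) (Z.of_nat c) (Z.of_nat n) S).
  replace (2 * Z.of_nat a1 + 1) with (Z.of_nat a) by lia.
  replace (2 * Z.of_nat c) with (Z.of_nat b) by lia. rewrite <- HS.
  replace (8 * Z.of_nat n + 5 * Z.of_nat a) with (Z.of_nat (8 * n + 5 * a)) by lia.
  rewrite H. rewrite !Nat2Z.inj_mul. ring.
Qed.

Lemma E1_count a b a1 c n : a = (2*a1+1)%nat -> b = (2*c)%nat -> (1 <= c)%nat ->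
  Nrep a (3*a) (4*b) (8*n + 5*a) =
  T3 Ppsi (Epsi a a) Ppsi (Epsi (12*a) 0) Pphi (Ephi c 0) n.
Proof.
  intros Ha Hb Hc. rewrite Nrep_cnt, T3_unfold.
  apply (cnt_bij _ _ _ _ (fun t => (fst (fst t), (snd (fst t) / 2, snd t)))
                         (fun p => ((fst p, 2 * fst (snd p)), snd (snd p)))).
  - apply NoDup_NL.
  - apply NoDup_L3l.
  - intros t; apply NL_in; lia.
  - intros p; apply T3_in; [apply valid_psi|apply valid_psi|apply valid_phi]; lia.
  - intros [[x y] z] H. pose proof (E1_class _ _ _ _ _ _ _ _ Ha Hb H) as HC.
    apply NP_eq in H. unfold T3P. simpl.
    assert (Hx : x mod 2 = 1) by (clear - HC; Z.to_euclidean_division_equations; lia).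
    assert (Hy : (y / 2) mod 2 = 1) by (clear - HC; Z.to_euclidean_division_equations; lia).
    assert (Hy2 : y = 2 * (y / 2)) by (clear - HC; Z.to_euclidean_division_equations; lia).
    pose proof (odd_sq_div x). pose proof (odd_sq_div (y/2)). unfold Ppsi in *.
    rewrite Hx, Hy. simpl. apply Z.eqb_eq. unfold Epsi, Ephi.
    assert (X1 := H0 (proj2 (Z.eqb_eq _ _) Hx)). assert (X2 := H1 (proj2 (Z.eqb_eq _ _) Hy)).
    remember (y / 2) as v. remember ((x * x - 1) / 8) as X. remember ((v * v - 1) / 8) as Y.
    clear - H X1 X2 Hy2 Ha Hb. subst y a b. zcast. nia.
  - intros [u [v z]] H. unfold T3P in H. simpl in H. bexpand.
    pose proof (odd_sq_div u). pose proof (odd_sq_div v). unfold Ppsi in *.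
    assert (X1 := H2 (proj2 (Z.eqb_eq _ _) H)). assert (X2 := H3 (proj2 (Z.eqb_eq _ _) H1)).
    unfold Epsi, Ephi in *. unfold NP. cbn [fst snd]. apply Z.eqb_eq.
    remember ((u * u - 1) / 8) as X. remember ((v * v - 1) / 8) as Y.
    clear - H0 X1 X2 Ha Hb. subst a b. zcast. nia.
  - intros [[x y] z] [[x' y'] z'] H H' E. cbn [fst snd] in E. injection E as E1 E2 E3. subst x' z'.
    pose proof (E1_class _ _ _ _ _ _ _ _ Ha Hb H) as HC.
    pose proof (E1_class _ _ _ _ _ _ _ _ Ha Hb H') as HC'.
    f_equal. f_equal. clear - HC HC' E2. Z.to_euclidean_division_equations; lia.
  - intros [u [v z]] [u' [v' z']] H H' E.
    assert (E1 := f_equal (fun t => fst (fst t)) E). assert (E2 := f_equal (fun t => snd (fst t)) E).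
    assert (E3 := f_equal snd E). cbn [fst snd] in E1, E2, E3.
    assert (v = v') by lia. subst. reflexivity.
Qed.

Lemma piece_bij (Q : Z * Z * Z -> bool) L P1 E1 P2 E2 P3 E3 n (dx dy dz : Z) :
  0 < dx -> 0 < dy -> 0 < dz -> NoDup L -> (forall t, Q t = true -> In t L) ->
  validF P1 E1 -> validF P2 E2 -> validF P3 E3 ->
  (forall x y z, Q (x, y, z) = true ->
     x mod dx = 0 /\ y mod dy = 0 /\ z mod dz = 0 /\
     T3P P1 E1 P2 E2 P3 E3 n (x / dx, (y / dy, z / dz)) = true) ->
  (forall u v w, T3P P1 E1 P2 E2 P3 E3 n (u, (v, w)) = true -> Q (dx * u, dy * v, dz * w) = true) ->
  cnt Q L = T3 P1 E1 P2 E2 P3 E3 n.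
Proof.
  intros Hx Hy Hz ND HL V1 V2 V3 Hf Hg. rewrite T3_unfold.
  apply (cnt_bij _ _ _ _ (fun t => (fst (fst t) / dx, (snd (fst t) / dy, snd t / dz)))
                         (fun p => ((dx * fst p, dy * fst (snd p)), dz * snd (snd p)))).
  - auto.
  - apply NoDup_L3l.
  - auto.
  - intros p; apply T3_in; auto.
  - intros [[x y] z] H. apply Hf; auto.
  - intros [u [v w]] H. apply Hg; auto.
  - intros [[x y] z] [[x' y'] z'] H H' E.
    destruct (Hf _ _ _ H) as [A1 [A2 [A3 _]]]. destruct (Hf _ _ _ H') as [B1 [B2 [B3 _]]].
    assert (E1' := f_equal fst E). assert (E2' := f_equal (fun t => fst (snd t)) E).
    assert (E3' := f_equal (fun t => snd (snd t)) E). cbn [fst snd] in E1', E2', E3'.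
    rewrite (Z_div_exact_full_2 x dx), (Z_div_exact_full_2 x' dx), (Z_div_exact_full_2 y dy),
      (Z_div_exact_full_2 y' dy), (Z_div_exact_full_2 z dz), (Z_div_exact_full_2 z' dz) by (auto; lia).
    rewrite E1', E2', E3'. reflexivity.
  - intros [u [v w]] [u' [v' w']] H H' E.
    assert (E1' := f_equal (fun t => fst (fst t)) E). assert (E2' := f_equal (fun t => snd (fst t)) E).
    assert (E3' := f_equal snd E). cbn [fst snd] in E1', E2', E3'.
    assert (u = u') by nia. assert (v = v') by nia. assert (w = w') by nia. subst. reflexivity.
Qed.

Lemma class_E2 x y z a1 c n S :
  8 * n + 7 * (2*a1+1) = 8*S + (2*a1+1)*((x mod 4)*(x mod 4) + 3*((y mod 4)*(y mod 4))) + 4*(2*c)*((z mod 2)*(z mod 2)) ->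
  x mod 4 = 2 /\ (y mod 4 = 1 \/ y mod 4 = 3).
Proof. intros Heq. revert Heq. resid x y z; intros Heq; lia. Qed.

Lemma NP_decomp a b M x y z : NP a (3*a) (4*b) M (x, y, z) = true ->
  exists S, Z.of_nat M = 8*S + Z.of_nat a*((x mod 4)*(x mod 4) + 3*((y mod 4)*(y mod 4))) + 4*Z.of_nat b*((z mod 2)*(z mod 2)).
Proof.
  intros H. apply NP_eq in H. destruct (decomp x y z (Z.of_nat a) (Z.of_nat b)) as [S HS].
  exists S. rewrite <- HS, H. rewrite !Nat2Z.inj_mul. ring.
Qed.

Lemma E2_count a b a1 c n : a = (2*a1+1)%nat -> b = (2*c)%nat -> (1 <= c)%nat ->
  Nrep a (3*a) (4*b) (8*n + 7*a) =
  T3 Ppsi (Epsi (4*a) 0) Ppsi (Epsi (3*a) 0) Pphi (Ephi c 0) n.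
Proof.
  intros Ha Hb Hc. rewrite Nrep_cnt.
  apply (piece_bij _ _ _ _ _ _ _ _ _ 2 1 1); try lia.
  - apply NoDup_NL.
  - intros t; apply NL_in; lia.
  - apply valid_psi; lia.
  - apply valid_psi; lia.
  - apply valid_phi; lia.
  - intros x y z H. destruct (NP_decomp _ _ _ _ _ _ H) as [S HS]. apply NP_eq in H.
    assert (HC := class_E2 x y z (Z.of_nat a1) (Z.of_nat c) (Z.of_nat n) S ltac:(subst a b; zcast; lia)).
    rewrite !Z.div_1_r, !Z.mod_1_r.
    assert (Hx : (x / 2) mod 2 = 1) by (clear - HC; Z.to_euclidean_division_equations; lia).
    assert (Hx2 : x = 2 * (x / 2)) by (clear - HC; Z.to_euclidean_division_equations; lia).
    assert (Hy : y mod 2 = 1) by (clear - HC; Z.to_euclidean_division_equations; lia).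
    split; [clear - HC; Z.to_euclidean_division_equations; lia|]. split; auto. split; auto.
    pose proof (odd_sq_div (x/2)). pose proof (odd_sq_div y). unfold Ppsi, T3P in *. cbn [fst snd].
    rewrite Hx, Hy. simpl. apply Z.eqb_eq. unfold Epsi, Ephi.
    assert (X1 := H0 (proj2 (Z.eqb_eq _ _) Hx)). assert (X2 := H1 (proj2 (Z.eqb_eq _ _) Hy)).
    remember (x / 2) as v. remember ((v * v - 1) / 8) as X. remember ((y * y - 1) / 8) as Y.
    clear - H X1 X2 Hx2 Ha Hb. subst x a b. zcast. nia.
  - intros u v w H. unfold T3P in H. cbn [fst snd] in H. bexpand.
    pose proof (odd_sq_div u). pose proof (odd_sq_div v). unfold Ppsi in *.
    assert (X1 := H2 (proj2 (Z.eqb_eq _ _) H)). assert (X2 := H3 (proj2 (Z.eqb_eq _ _) H1)).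
    unfold Epsi, Ephi in *. unfold NP. cbn [fst snd]. apply Z.eqb_eq.
    remember ((u * u - 1) / 8) as X. remember ((v * v - 1) / 8) as Y.
    clear - H0 X1 X2 Ha Hb. subst a b. zcast. nia.
Qed.

End MF.
Import MF.

Module MG.
Local Open Scope bool_scope.
Local Open Scope Z_scope.

Definition nrm (x y : Z) := x * x + 3 * (y * y).

Lemma nrm_decomp x y : exists S, nrm x y = 8 * S + ((x mod 4) * (x mod 4) + 3 * ((y mod 4) * (y mod 4))).
Proof.
  destruct (decomp x y 0 1 0) as [S HS]. exists S. unfold nrm. lia.
Qed.

Ltac resid2 x y :=
  let Hi := fresh in let Hj := fresh in
  assert (Hi : x mod 4 = 0 \/ x mod 4 = 1 \/ x mod 4 = 2 \/ x mod 4 = 3) by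
    (pose proof (Z.mod_pos_bound x 4 ltac:(lia)); lia);
  assert (Hj : y mod 4 = 0 \/ y mod 4 = 1 \/ y mod 4 = 2 \/ y mod 4 = 3) by
    (pose proof (Z.mod_pos_bound y 4 ltac:(lia)); lia);
  destruct Hi as [Hi|[Hi|[Hi|Hi]]]; destruct Hj as [Hj|[Hj|[Hj|Hj]]];
  rewrite ?Hi, ?Hj.

Lemma nrm_oo x y : x mod 2 = 1 -> y mod 2 = 1 -> (nrm x y) mod 8 = 4.
Proof.
  intros Hx Hy. destruct (nrm_decomp x y) as [S HS]. rewrite HS. revert Hx Hy.
  resid2 x y; intros Hx Hy; Z.to_euclidean_division_equations; lia.
Qed.

Lemma nrm_ee x y : x mod 2 = 0 -> y mod 2 = 0 -> (nrm x y) mod 8 = 4 ->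
  (x mod 4 = 2 /\ y mod 4 = 0) \/ (x mod 4 = 0 /\ y mod 4 = 2).
Proof.
  intros Hx Hy. destruct (nrm_decomp x y) as [S HS]. rewrite HS. revert Hx Hy.
  resid2 x y; intros Hx Hy Hm; Z.to_euclidean_division_equations; lia.
Qed.

Lemma nrm_sigma x y X Y : 2 * X = x + 3 * y -> 2 * Y = x - y -> nrm X Y = nrm x y.
Proof. intros H1 H2. unfold nrm. nia. Qed.

Section Eis.
Variable M : nat.
Variable F : Z -> Z -> bool.
Hypothesis HF : forall N z, F N z = true -> 0 <= N <= Z.of_nat M /\ Z.abs z <= Z.of_nat M.

Definition OOp (t : Z * Z * Z) := F (nrm (fst (fst t)) (snd (fst t))) (snd t) &&
  Z.eqb (fst (fst t) mod 2) 1 && Z.eqb (snd (fst t) mod 2) 1.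
Definition EEp (t : Z * Z * Z) := F (nrm (fst (fst t)) (snd (fst t))) (snd t) &&
  Z.eqb (fst (fst t) mod 2) 0 && Z.eqb (snd (fst t) mod 2) 0 && Z.eqb (nrm (fst (fst t)) (snd (fst t)) mod 8) 4.
Definition Cp (t : Z * Z * Z) := Z.eqb ((fst (fst t) - snd (fst t)) mod 4) 0.

Lemma F_in x y z : F (nrm x y) z = true -> In (x, y, z) (NL M).
Proof.
  intros H. apply HF in H. unfold nrm in H. unfold NL. rewrite !in_prod_iff, !in_zrange. nia.
Qed.

Ltac bex := repeat match goal with
  | H : (_ && _) = true |- _ => apply andb_prop in H as [? ?]
  | H : Z.eqb _ _ = true |- _ => apply Z.eqb_eq in H
  | H : negb _ = true |- _ => apply Bool.negb_true_iff in H
  | H : Z.eqb _ _ = false |- _ => apply Z.eqb_neq in H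
  end.

Lemma B_eq_A : cnt (fun t => OOp t && negb (Cp t)) (NL M) = cnt (fun t => OOp t && Cp t) (NL M).
Proof.
  apply (cnt_bij _ _ _ _ (fun t => (fst (fst t), - snd (fst t), snd t)) (fun t => (fst (fst t), - snd (fst t), snd t))).
  - apply NoDup_NL.
  - apply NoDup_NL.
  - intros [[x y] z] H. unfold OOp, Cp in H. cbn [fst snd] in H. bex. apply F_in; auto.
  - intros [[x y] z] H. unfold OOp, Cp in H. cbn [fst snd] in H. bex. apply F_in; auto.
  - intros [[x y] z] H. unfold OOp, Cp in *. cbn [fst snd] in *. bex.
    replace (nrm x (- y)) with (nrm x y) by (unfold nrm; ring). match goal with H : F (nrm x y) z = true |- _ => rewrite H end.
    apply andb_true_intro; split; [apply andb_true_intro; split; [apply andb_true_intro; split|]|];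
      auto; apply Z.eqb_eq; Z.to_euclidean_division_equations; lia.
  - intros [[x y] z] H. unfold OOp, Cp in *. cbn [fst snd] in *. bex.
    replace (nrm x (- y)) with (nrm x y) by (unfold nrm; ring). match goal with H : F (nrm x y) z = true |- _ => rewrite H end. simpl.
    apply andb_true_intro; split; [apply andb_true_intro; split|];
      try apply Bool.negb_true_iff; try apply Z.eqb_eq; try apply Z.eqb_neq;
      Z.to_euclidean_division_equations; lia.
  - intros [[x y] z] [[x' y'] z'] _ _ E. cbn [fst snd] in E. inversion E. f_equal. f_equal. lia.
  - intros [[x y] z] [[x' y'] z'] _ _ E. cbn [fst snd] in E. inversion E. f_equal. f_equal. lia.
Qed.
Lemma A_eq_EE : cnt (fun t => OOp t && Cp t) (NL M) = cnt EEp (NL M).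
Proof.
  set (sg := fun t : Z * Z * Z => ((fst (fst t) + 3 * snd (fst t)) / 2, (fst (fst t) - snd (fst t)) / 2, snd t)).
  apply (cnt_bij _ _ _ _ sg sg).
  - apply NoDup_NL.
  - apply NoDup_NL.
  - intros [[x y] z] H. unfold OOp, Cp in H. cbn [fst snd] in H. bex. apply F_in; auto.
  - intros [[x y] z] H. unfold EEp in H. cbn [fst snd] in H. bex. apply F_in; auto.
  - intros [[x y] z] H. unfold OOp, Cp, EEp, sg in *. cbn [fst snd] in *. bex.
    assert (H1' : 2 * ((x + 3 * y) / 2) = x + 3 * y) by (Z.to_euclidean_division_equations; lia).
    assert (H2' : 2 * ((x - y) / 2) = x - y) by (Z.to_euclidean_division_equations; lia).
    rewrite (nrm_sigma x y _ _ H1' H2').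
    match goal with H : F (nrm x y) z = true |- _ => rewrite H end.
    rewrite (nrm_oo x y) by auto.
    repeat (apply andb_true_intro; split); try reflexivity; apply Z.eqb_eq;
      Z.to_euclidean_division_equations; lia.
  - intros [[x y] z] H. unfold OOp, Cp, EEp, sg in *. cbn [fst snd] in *. bex.
    assert (HC := nrm_ee x y ltac:(auto) ltac:(auto) ltac:(auto)).
    assert (H1' : 2 * ((x + 3 * y) / 2) = x + 3 * y) by (Z.to_euclidean_division_equations; lia).
    assert (H2' : 2 * ((x - y) / 2) = x - y) by (Z.to_euclidean_division_equations; lia).
    rewrite (nrm_sigma x y _ _ H1' H2').
    match goal with H : F (nrm x y) z = true |- _ => rewrite H end.
    repeat (apply andb_true_intro; split); try reflexivity; apply Z.eqb_eq;
      Z.to_euclidean_division_equations; lia.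
  - intros [[x y] z] [[x' y'] z'] H H' E. unfold OOp, Cp, sg in *. cbn [fst snd] in *. bex.
    assert (E1 := f_equal (fun t => fst (fst t)) E). assert (E2 := f_equal (fun t => snd (fst t)) E).
    assert (E3 := f_equal snd E). cbn [fst snd] in E1, E2, E3. subst z'.
    assert (x = x' /\ y = y') as [-> ->] by (Z.to_euclidean_division_equations; lia). reflexivity.
  - intros [[x y] z] [[x' y'] z'] H H' E. unfold EEp, sg in *. cbn [fst snd] in *. bex.
    assert (E1 := f_equal (fun t => fst (fst t)) E). assert (E2 := f_equal (fun t => snd (fst t)) E).
    assert (E3 := f_equal snd E). cbn [fst snd] in E1, E2, E3. subst z'.
    assert (x = x' /\ y = y') as [-> ->] by (Z.to_euclidean_division_equations; lia). reflexivity.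
Qed.

Lemma eis : cnt OOp (NL M) = (2 * cnt EEp (NL M))%nat.
Proof.
  rewrite (cnt_split OOp Cp). rewrite B_eq_A, A_eq_EE. lia.
Qed.
End Eis.

End MG.
Import MG.

Module MH.
Local Open Scope bool_scope.
Local Open Scope Z_scope.

Ltac bex := repeat match goal with
  | H : (_ && _) = true |- _ => apply andb_prop in H as [? ?]
  | H : Z.eqb _ _ = true |- _ => apply Z.eqb_eq in H
  | H : negb _ = true |- _ => apply Bool.negb_true_iff in H
  | H : Z.eqb _ _ = false |- _ => apply Z.eqb_neq in H
  | H : Z.leb _ _ = true |- _ => apply Z.leb_le in H
  end.

Lemma class_E3 x y z a1 c n S :
  8 * n = 8*S + (2*a1+1)*((x mod 4)*(x mod 4) + 3*((y mod 4)*(y mod 4))) + 4*(2*c+1)*((z mod 2)*(z mod 2)) ->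
  (z mod 2 = 0 /\ ((x mod 4 = 0 /\ y mod 4 = 0) \/ (x mod 4 = 2 /\ y mod 4 = 2))) \/
  (z mod 2 = 1 /\ (((x mod 4 = 1 \/ x mod 4 = 3) /\ (y mod 4 = 1 \/ y mod 4 = 3)) \/
                   (x mod 4 = 2 /\ y mod 4 = 0) \/ (x mod 4 = 0 /\ y mod 4 = 2))).
Proof. intros Heq. revert Heq. resid x y z; intros Heq; lia. Qed.

Lemma class_E4 x y z a1 c n S :
  8 * n + 4 = 8*S + (2*a1+1)*((x mod 4)*(x mod 4) + 3*((y mod 4)*(y mod 4))) + 4*(2*c+1)*((z mod 2)*(z mod 2)) ->
  (z mod 2 = 1 /\ ((x mod 4 = 0 /\ y mod 4 = 0) \/ (x mod 4 = 2 /\ y mod 4 = 2))) \/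
  (z mod 2 = 0 /\ (((x mod 4 = 1 \/ x mod 4 = 3) /\ (y mod 4 = 1 \/ y mod 4 = 3)) \/
                   (x mod 4 = 2 /\ y mod 4 = 0) \/ (x mod 4 = 0 /\ y mod 4 = 2))).
Proof. intros Heq. revert Heq. resid x y z; intros Heq; lia. Qed.

Definition Zev (t : Z * Z * Z) := Z.eqb (snd t mod 2) 0.
Definition Xm4 (k : Z) (t : Z * Z * Z) := Z.eqb (fst (fst t) mod 4) k.
Definition Xodd (t : Z * Z * Z) := Z.eqb (fst (fst t) mod 2) 1.

Ltac andsplit := repeat (apply andb_true_intro; split); try reflexivity.

Section E3.
Variables (a b a1 c n : nat).
Hypothesis Ha : a = (2*a1+1)%nat.
Hypothesis Hb : b = (2*c+1)%nat.
Let M := (8 * n)%nat.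
Let P := NP a (3*a) (4*b) M.

Lemma E3_class x y z : P (x, y, z) = true ->
  (z mod 2 = 0 /\ ((x mod 4 = 0 /\ y mod 4 = 0) \/ (x mod 4 = 2 /\ y mod 4 = 2))) \/
  (z mod 2 = 1 /\ (((x mod 4 = 1 \/ x mod 4 = 3) /\ (y mod 4 = 1 \/ y mod 4 = 3)) \/
                   (x mod 4 = 2 /\ y mod 4 = 0) \/ (x mod 4 = 0 /\ y mod 4 = 2))).
Proof.
  intros H. destruct (NP_decomp _ _ _ _ _ _ H) as [S HS].
  apply (class_E3 x y z (Z.of_nat a1) (Z.of_nat c) (Z.of_nat n) S). unfold M in HS. subst a b. zcast. lia.
Qed.

Lemma E3_p1 : cnt (fun t => P t && Zev t && Xm4 0 t) (NL M) =
  T3 Pphi (Ephi (2*a) 0) Pphi (Ephi (6*a) 0) Pphi (Ephi (2*b) 0) n.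
Proof.
  apply (piece_bij _ _ _ _ _ _ _ _ _ 4 4 2); try lia.
  - apply NoDup_NL.
  - intros t Ht. apply andb_prop in Ht as [Ht _]. apply andb_prop in Ht as [Ht _]. apply NL_in in Ht; auto; lia.
  - apply valid_phi; lia.
  - apply valid_phi; lia.
  - apply valid_phi; lia.
  - intros x y z H. unfold Zev, Xm4 in H. cbn [fst snd] in H.
    apply andb_prop in H as [H C2]; apply andb_prop in H as [H C1]; apply Z.eqb_eq in C1, C2.
    pose proof (E3_class x y z H) as HC. apply NP_eq in H.
    assert (Hx : x = 4 * (x / 4)) by (clear - HC C1 C2; Z.to_euclidean_division_equations; lia).
    assert (Hy : y = 4 * (y / 4)) by (clear - HC C1 C2; Z.to_euclidean_division_equations; lia).
    assert (Hz : z = 2 * (z / 2)) by (clear - HC C1 C2; Z.to_euclidean_division_equations; lia).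
    split; [clear - Hx; Z.to_euclidean_division_equations; lia|].
    split; [clear - Hy; Z.to_euclidean_division_equations; lia|].
    split; [clear - Hz; Z.to_euclidean_division_equations; lia|].
    unfold T3P, Pphi, Ephi. cbn [fst snd andb]. apply Z.eqb_eq.
    remember (x / 4) as X. remember (y / 4) as Y. remember (z / 2) as W.
    clear - H Hx Hy Hz Ha Hb. unfold M in H. subst x y z a b. zcast. nia.
  - intros u v w H. unfold T3P, Pphi, Ephi in H. cbn [fst snd andb] in H. bex.
    unfold P, NP, Zev, Xm4, M. cbn [fst snd]. andsplit; apply Z.eqb_eq.
    + clear - H Ha Hb. subst a b. zcast. nia.
    + Z.to_euclidean_division_equations; lia.
    + Z.to_euclidean_division_equations; lia.
Qed.
Lemma E3_p2 : cnt (fun t => P t && Zev t && negb (Xm4 0 t)) (NL M) =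
  T3 Ppsi (Epsi (4*a) (2*a)) Ppsi (Epsi (12*a) 0) Pphi (Ephi (2*b) 0) n.
Proof.
  apply (piece_bij _ _ _ _ _ _ _ _ _ 2 2 2); try lia.
  - apply NoDup_NL.
  - intros t Ht. apply andb_prop in Ht as [Ht _]. apply andb_prop in Ht as [Ht _]. apply NL_in in Ht; auto; lia.
  - apply valid_psi; lia.
  - apply valid_psi; lia.
  - apply valid_phi; lia.
  - intros x y z H. unfold Zev, Xm4 in H. cbn [fst snd] in H.
    apply andb_prop in H as [H C2]; apply andb_prop in H as [H C1]; apply Bool.negb_true_iff in C2;
    apply Z.eqb_eq in C1; apply Z.eqb_neq in C2.
    pose proof (E3_class x y z H) as HC. apply NP_eq in H.
    assert (Hx : x = 2 * (x / 2)) by (clear - HC C1 C2; Z.to_euclidean_division_equations; lia).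
    assert (Hy : y = 2 * (y / 2)) by (clear - HC C1 C2; Z.to_euclidean_division_equations; lia).
    assert (Hz : z = 2 * (z / 2)) by (clear - HC C1 C2; Z.to_euclidean_division_equations; lia).
    assert (Ox : (x / 2) mod 2 = 1) by (clear - HC C1 C2; Z.to_euclidean_division_equations; lia).
    assert (Oy : (y / 2) mod 2 = 1) by (clear - HC C1 C2; Z.to_euclidean_division_equations; lia).
    split; [clear - Hx; Z.to_euclidean_division_equations; lia|].
    split; [clear - Hy; Z.to_euclidean_division_equations; lia|].
    split; [clear - Hz; Z.to_euclidean_division_equations; lia|].
    pose proof (odd_sq_div (x/2)) as D1. pose proof (odd_sq_div (y/2)) as D2. unfold Ppsi in *.
    rewrite Ox, Oy in *. specialize (D1 eq_refl). specialize (D2 eq_refl).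
    unfold T3P, Ppsi, Pphi, Epsi, Ephi. cbn [fst snd]. rewrite Ox, Oy. cbn [Z.eqb andb]. apply Z.eqb_eq.
    remember (x / 2) as X. remember (y / 2) as Y. remember (z / 2) as W.
    remember ((X * X - 1) / 8) as U. remember ((Y * Y - 1) / 8) as V.
    clear - H Hx Hy Hz Ha Hb D1 D2. unfold M in H. subst x y z a b. zcast. nia.
  - intros u v w H. unfold T3P, Ppsi, Pphi, Epsi, Ephi in H. cbn [fst snd andb] in H. rewrite ?Bool.andb_true_r in H.
    apply andb_prop in H as [H E]; apply andb_prop in H as [O1 O2]; apply Z.eqb_eq in O1, O2, E.
    pose proof (odd_sq_div u) as D1. pose proof (odd_sq_div v) as D2. unfold Ppsi in *.
    rewrite O1 in D1; rewrite O2 in D2. specialize (D1 eq_refl). specialize (D2 eq_refl).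
    unfold P, NP, Zev, Xm4, M. cbn [fst snd]. andsplit.
    + apply Z.eqb_eq. remember ((u * u - 1) / 8) as U. remember ((v * v - 1) / 8) as V.
      clear - E D1 D2 Ha Hb. subst a b. zcast. nia.
    + apply Z.eqb_eq. Z.to_euclidean_division_equations; lia.
    + apply Bool.negb_true_iff, Z.eqb_neq. clear - O1. Z.to_euclidean_division_equations; lia.
Qed.

Let s := (a1 + c + 1)%nat.

Lemma E3_p3 : cnt (fun t => P t && negb (Zev t) && negb (Xodd t) && Xm4 2 t) (NL M) =
  T3 Ppsi (Epsi (4*a) 0) Pphi (Ephi (6*a) 0) Ppsi (Epsi (4*b) s) n.
Proof.
  apply (piece_bij _ _ _ _ _ _ _ _ _ 2 4 1); try lia.
  - apply NoDup_NL.
  - intros t Ht. apply andb_prop in Ht as [Ht _]. apply andb_prop in Ht as [Ht _].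
    apply andb_prop in Ht as [Ht _]. apply NL_in in Ht; auto; lia.
  - apply valid_psi; lia.
  - apply valid_phi; lia.
  - apply valid_psi; lia.
  - intros x y z H. unfold Zev, Xm4, Xodd in H. cbn [fst snd] in H.
    apply andb_prop in H as [H C3]; apply andb_prop in H as [H C2]; apply andb_prop in H as [H C1].
    apply Bool.negb_true_iff in C1, C2. apply Z.eqb_eq in C3; apply Z.eqb_neq in C1, C2.
    pose proof (E3_class x y z H) as HC. apply NP_eq in H.
    assert (Hx : x = 2 * (x / 2)) by (clear - HC C1 C2 C3; Z.to_euclidean_division_equations; lia).
    assert (Hy : y = 4 * (y / 4)) by (clear - HC C1 C2 C3; Z.to_euclidean_division_equations; lia).
    assert (Oz : z mod 2 = 1) by (clear - HC C1 C2 C3; Z.to_euclidean_division_equations; lia).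
    assert (Ox : (x / 2) mod 2 = 1) by (clear - HC C1 C2 C3; Z.to_euclidean_division_equations; lia).
    split; [clear - Hx; Z.to_euclidean_division_equations; lia|].
    split; [clear - Hy; Z.to_euclidean_division_equations; lia|].
    split; [apply Z.mod_1_r|]. rewrite Z.div_1_r.
    pose proof (odd_sq_div (x/2)) as D1. pose proof (odd_sq_div z) as D2. unfold Ppsi in *.
    rewrite Ox in *. rewrite Oz in *. specialize (D1 eq_refl). specialize (D2 eq_refl).
    unfold T3P, Ppsi, Pphi, Epsi, Ephi. cbn [fst snd]. rewrite Ox, Oz. cbn [Z.eqb andb]. apply Z.eqb_eq.
    remember (x / 2) as X. remember (y / 4) as Y.
    remember ((X * X - 1) / 8) as U. remember ((z * z - 1) / 8) as V.
    clear - H Hx Hy Ha Hb D1 D2. unfold M, s in *. subst x y a b. zcast. nia.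
  - intros u v w H. unfold T3P, Ppsi, Pphi, Epsi, Ephi in H. cbn [fst snd andb] in H. rewrite ?Bool.andb_true_r in H.
    apply andb_prop in H as [H E]; apply andb_prop in H as [O1 O2]; apply Z.eqb_eq in O1, O2, E.
    pose proof (odd_sq_div u) as D1. pose proof (odd_sq_div w) as D2. unfold Ppsi in *.
    rewrite O1 in D1; rewrite O2 in D2. specialize (D1 eq_refl). specialize (D2 eq_refl).
    unfold P, NP, Zev, Xm4, Xodd, M. cbn [fst snd]. rewrite Z.mul_1_l. andsplit.
    + apply Z.eqb_eq. remember ((u * u - 1) / 8) as U. remember ((w * w - 1) / 8) as V.
      clear - E D1 D2 Ha Hb. unfold s in *. subst a b. zcast. nia.
    + apply Bool.negb_true_iff, Z.eqb_neq. clear - O2. Z.to_euclidean_division_equations; lia.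
    + apply Bool.negb_true_iff, Z.eqb_neq. clear - O1. Z.to_euclidean_division_equations; lia.
    + apply Z.eqb_eq. clear - O1. Z.to_euclidean_division_equations; lia.
Qed.

Lemma E3_p4 : cnt (fun t => P t && negb (Zev t) && negb (Xodd t) && negb (Xm4 2 t)) (NL M) =
  T3 Pphi (Ephi (2*a) 0) Ppsi (Epsi (12*a) 0) Ppsi (Epsi (4*b) (a + s)) n.
Proof.
  apply (piece_bij _ _ _ _ _ _ _ _ _ 4 2 1); try lia.
  - apply NoDup_NL.
  - intros t Ht. apply andb_prop in Ht as [Ht _]. apply andb_prop in Ht as [Ht _].
    apply andb_prop in Ht as [Ht _]. apply NL_in in Ht; auto; lia.
  - apply valid_phi; lia.
  - apply valid_psi; lia.
  - apply valid_psi; lia.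
  - intros x y z H. unfold Zev, Xm4, Xodd in H. cbn [fst snd] in H.
    apply andb_prop in H as [H C3]; apply andb_prop in H as [H C2]; apply andb_prop in H as [H C1].
    apply Bool.negb_true_iff in C1, C2, C3. apply Z.eqb_neq in C1, C2, C3.
    pose proof (E3_class x y z H) as HC. apply NP_eq in H.
    assert (Hx : x = 4 * (x / 4)) by (clear - HC C1 C2 C3; Z.to_euclidean_division_equations; lia).
    assert (Hy : y = 2 * (y / 2)) by (clear - HC C1 C2 C3; Z.to_euclidean_division_equations; lia).
    assert (Oz : z mod 2 = 1) by (clear - HC C1 C2 C3; Z.to_euclidean_division_equations; lia).
    assert (Oy : (y / 2) mod 2 = 1) by (clear - HC C1 C2 C3; Z.to_euclidean_division_equations; lia).
    split; [clear - Hx; Z.to_euclidean_division_equations; lia|].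
    split; [clear - Hy; Z.to_euclidean_division_equations; lia|].
    split; [apply Z.mod_1_r|]. rewrite Z.div_1_r.
    pose proof (odd_sq_div (y/2)) as D1. pose proof (odd_sq_div z) as D2. unfold Ppsi in *.
    rewrite Oy in *. rewrite Oz in *. specialize (D1 eq_refl). specialize (D2 eq_refl).
    unfold T3P, Ppsi, Pphi, Epsi, Ephi. cbn [fst snd]. rewrite Oy, Oz. cbn [Z.eqb andb]. apply Z.eqb_eq.
    remember (x / 4) as X. remember (y / 2) as Y.
    remember ((Y * Y - 1) / 8) as U. remember ((z * z - 1) / 8) as V.
    clear - H Hx Hy Ha Hb D1 D2. unfold M, s in *. subst x y a b. zcast. nia.
  - intros u v w H. unfold T3P, Ppsi, Pphi, Epsi, Ephi in H. cbn [fst snd andb] in H. rewrite ?Bool.andb_true_r in H.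
    apply andb_prop in H as [H E]; apply andb_prop in H as [O1 O2]; apply Z.eqb_eq in O1, O2, E.
    pose proof (odd_sq_div v) as D1. pose proof (odd_sq_div w) as D2. unfold Ppsi in *.
    rewrite O1 in D1; rewrite O2 in D2. specialize (D1 eq_refl). specialize (D2 eq_refl).
    unfold P, NP, Zev, Xm4, Xodd, M. cbn [fst snd]. rewrite Z.mul_1_l. andsplit.
    + apply Z.eqb_eq. remember ((v * v - 1) / 8) as U. remember ((w * w - 1) / 8) as V.
      clear - E D1 D2 Ha Hb. unfold s in *. subst a b. zcast. nia.
    + apply Bool.negb_true_iff, Z.eqb_neq. clear - O2. Z.to_euclidean_division_equations; lia.
    + apply Bool.negb_true_iff, Z.eqb_neq. Z.to_euclidean_division_equations; lia.
    + apply Bool.negb_true_iff, Z.eqb_neq. Z.to_euclidean_division_equations; lia.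
Qed.
Definition F3 (N z : Z) := Z.eqb (Z.of_nat M) (Z.of_nat a * N + Z.of_nat (4*b) * (z*z)) && Z.leb 0 N && Z.eqb (z mod 2) 1.

Lemma F3_bound N z : F3 N z = true -> 0 <= N <= Z.of_nat M /\ Z.abs z <= Z.of_nat M.
Proof. unfold F3. intros H. bex. subst a b. zcast. nia. Qed.

Lemma E3_OO : cnt (fun t => P t && negb (Zev t) && Xodd t) (NL M) = cnt (OOp F3) (NL M).
Proof.
  apply cnt_ext_in. intros [[x y] z] _. apply Bool.eq_iff_eq_true. split; intros H.
  - apply andb_prop in H as [H C2]; apply andb_prop in H as [H C1].
    pose proof (E3_class x y z H) as HC. apply NP_eq in H. unfold Zev, Xodd in C1, C2.
    cbn [fst snd] in C1, C2. bex. unfold OOp, F3, nrm. cbn [fst snd]. andsplit.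
    + apply Z.eqb_eq. rewrite H. zcast. ring.
    + apply Z.leb_le. nia.
    + apply Z.eqb_eq. clear - HC C1 C2. Z.to_euclidean_division_equations; lia.
    + apply Z.eqb_eq. auto.
    + apply Z.eqb_eq. clear - HC C1 C2. Z.to_euclidean_division_equations; lia.
  - unfold OOp, F3, nrm in H. cbn [fst snd] in H. bex.
    unfold P, NP, Zev, Xodd. cbn [fst snd]. andsplit.
    + apply Z.eqb_eq. rewrite H. zcast. ring.
    + apply Bool.negb_true_iff, Z.eqb_neq. lia.
    + apply Z.eqb_eq. auto.
Qed.

Lemma E3_EE : cnt (fun t => P t && negb (Zev t) && negb (Xodd t)) (NL M) = cnt (EEp F3) (NL M).
Proof.
  apply cnt_ext_in. intros [[x y] z] _. apply Bool.eq_iff_eq_true. split; intros H.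
  - apply andb_prop in H as [H C2]; apply andb_prop in H as [H C1].
    pose proof (E3_class x y z H) as HC. apply NP_eq in H. unfold Zev, Xodd in C1, C2.
    cbn [fst snd] in C1, C2. bex.
    assert (Hn : nrm x y mod 8 = 4).
    { destruct (nrm_decomp x y) as [S HS]. rewrite HS.
      assert (x mod 4 = 2 /\ y mod 4 = 0 \/ x mod 4 = 0 /\ y mod 4 = 2) as [[-> ->]|[-> ->]]
        by (clear - HC C1 C2; Z.to_euclidean_division_equations; lia);
      Z.to_euclidean_division_equations; lia. }
    unfold EEp, F3. cbn [fst snd]. rewrite Hn. unfold nrm. andsplit.
    + apply Z.eqb_eq. rewrite H. zcast. ring.
    + apply Z.leb_le. nia.
    + apply Z.eqb_eq. clear - HC C1 C2. Z.to_euclidean_division_equations; lia.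
    + apply Z.eqb_eq. clear - HC C1 C2. Z.to_euclidean_division_equations; lia.
    + apply Z.eqb_eq. clear - HC C1 C2. Z.to_euclidean_division_equations; lia.
  - unfold EEp, F3, nrm in H. cbn [fst snd] in H. bex.
    unfold P, NP, Zev, Xodd. cbn [fst snd]. andsplit.
    + apply Z.eqb_eq. rewrite H. zcast. ring.
    + apply Bool.negb_true_iff, Z.eqb_neq. lia.
    + apply Bool.negb_true_iff, Z.eqb_neq. lia.
Qed.

Lemma E3_total : cnt P (NL M) =
  (T3 Pphi (Ephi (2*a) 0) Pphi (Ephi (6*a) 0) Pphi (Ephi (2*b) 0) n +
   T3 Ppsi (Epsi (4*a) (2*a)) Ppsi (Epsi (12*a) 0) Pphi (Ephi (2*b) 0) n +
   3 * (T3 Ppsi (Epsi (4*a) 0) Pphi (Ephi (6*a) 0) Ppsi (Epsi (4*b) s) n +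
        T3 Pphi (Ephi (2*a) 0) Ppsi (Epsi (12*a) 0) Ppsi (Epsi (4*b) (a + s)) n))%nat.
Proof.
  rewrite (cnt_split P Zev). rewrite (cnt_split (fun t => P t && Zev t) (Xm4 0)).
  rewrite (cnt_split (fun t => P t && negb (Zev t)) Xodd).
  rewrite E3_p1, E3_p2, E3_OO, (eis M F3 F3_bound), <- E3_EE.
  rewrite (cnt_split (fun t => P t && negb (Zev t) && negb (Xodd t)) (Xm4 2)).
  rewrite E3_p3, E3_p4. lia.
Qed.
End E3.

Section E4.
Variables (a b a1 c n : nat).
Hypothesis Ha : a = (2*a1+1)%nat.
Hypothesis Hb : b = (2*c+1)%nat.
Let M := (8 * n + 4)%nat.
Let P := NP a (3*a) (4*b) M.

Lemma E4_class x y z : P (x, y, z) = true ->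
  (z mod 2 = 1 /\ ((x mod 4 = 0 /\ y mod 4 = 0) \/ (x mod 4 = 2 /\ y mod 4 = 2))) \/
  (z mod 2 = 0 /\ (((x mod 4 = 1 \/ x mod 4 = 3) /\ (y mod 4 = 1 \/ y mod 4 = 3)) \/
                   (x mod 4 = 2 /\ y mod 4 = 0) \/ (x mod 4 = 0 /\ y mod 4 = 2))).
Proof.
  intros H. destruct (NP_decomp _ _ _ _ _ _ H) as [S HS].
  apply (class_E4 x y z (Z.of_nat a1) (Z.of_nat c) (Z.of_nat n) S). unfold M in HS. subst a b. zcast. lia.
Qed.

Lemma E4_p1 : cnt (fun t => P t && negb (Zev t) && Xm4 0 t) (NL M) =
  T3 Pphi (Ephi (2*a) 0) Pphi (Ephi (6*a) 0) Ppsi (Epsi (4*b) c) n.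
Proof.
  apply (piece_bij _ _ _ _ _ _ _ _ _ 4 4 1); try lia.
  - apply NoDup_NL.
  - intros t Ht. apply andb_prop in Ht as [Ht _]. apply andb_prop in Ht as [Ht _]. apply NL_in in Ht; auto; lia.
  - apply valid_phi; lia.
  - apply valid_phi; lia.
  - apply valid_psi; lia.
  - intros x y z H. unfold Zev, Xm4 in H. cbn [fst snd] in H.
    apply andb_prop in H as [H C2]; apply andb_prop in H as [H C1]; apply Bool.negb_true_iff in C1;
    apply Z.eqb_neq in C1; apply Z.eqb_eq in C2.
    pose proof (E4_class x y z H) as HC. apply NP_eq in H.
    assert (Hx : x = 4 * (x / 4)) by (clear - HC C1 C2; Z.to_euclidean_division_equations; lia).
    assert (Hy : y = 4 * (y / 4)) by (clear - HC C1 C2; Z.to_euclidean_division_equations; lia).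
    assert (Oz : z mod 2 = 1) by (clear - HC C1 C2; Z.to_euclidean_division_equations; lia).
    split; [clear - Hx; Z.to_euclidean_division_equations; lia|].
    split; [clear - Hy; Z.to_euclidean_division_equations; lia|].
    split; [apply Z.mod_1_r|]. rewrite Z.div_1_r.
    pose proof (odd_sq_div z) as D2. unfold Ppsi in *.
    rewrite Oz in *. specialize (D2 eq_refl).
    unfold T3P, Ppsi, Pphi, Epsi, Ephi. cbn [fst snd]. rewrite Oz. cbn [Z.eqb andb]. apply Z.eqb_eq.
    remember (x / 4) as X. remember (y / 4) as Y. remember ((z * z - 1) / 8) as V.
    clear - H Hx Hy Ha Hb D2. unfold M in *. subst x y a b. zcast. nia.
  - intros u v w H. unfold T3P, Ppsi, Pphi, Epsi, Ephi in H. cbn [fst snd andb] in H. rewrite ?Bool.andb_true_r in H.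
    apply andb_prop in H as [O2 E]; apply Z.eqb_eq in O2, E.
    pose proof (odd_sq_div w) as D2. unfold Ppsi in *.
    rewrite O2 in D2. specialize (D2 eq_refl).
    unfold P, NP, Zev, Xm4, M. cbn [fst snd]. rewrite Z.mul_1_l. andsplit.
    + apply Z.eqb_eq. remember ((w * w - 1) / 8) as V.
      clear - E D2 Ha Hb. subst a b. zcast. nia.
    + apply Bool.negb_true_iff, Z.eqb_neq. clear - O2. Z.to_euclidean_division_equations; lia.
    + apply Z.eqb_eq. Z.to_euclidean_division_equations; lia.
Qed.

Lemma E4_p2 : cnt (fun t => P t && negb (Zev t) && negb (Xm4 0 t)) (NL M) =
  T3 Ppsi (Epsi (4*a) 0) Ppsi (Epsi (12*a) 0) Ppsi (Epsi (4*b) (2*a + c)) n.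
Proof.
  apply (piece_bij _ _ _ _ _ _ _ _ _ 2 2 1); try lia.
  - apply NoDup_NL.
  - intros t Ht. apply andb_prop in Ht as [Ht _]. apply andb_prop in Ht as [Ht _]. apply NL_in in Ht; auto; lia.
  - apply valid_psi; lia.
  - apply valid_psi; lia.
  - apply valid_psi; lia.
  - intros x y z H. unfold Zev, Xm4 in H. cbn [fst snd] in H.
    apply andb_prop in H as [H C2]; apply andb_prop in H as [H C1]; apply Bool.negb_true_iff in C1, C2;
    apply Z.eqb_neq in C1, C2.
    pose proof (E4_class x y z H) as HC. apply NP_eq in H.
    assert (Hx : x = 2 * (x / 2)) by (clear - HC C1 C2; Z.to_euclidean_division_equations; lia).
    assert (Hy : y = 2 * (y / 2)) by (clear - HC C1 C2; Z.to_euclidean_division_equations; lia).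
    assert (Oz : z mod 2 = 1) by (clear - HC C1 C2; Z.to_euclidean_division_equations; lia).
    assert (Ox : (x / 2) mod 2 = 1) by (clear - HC C1 C2; Z.to_euclidean_division_equations; lia).
    assert (Oy : (y / 2) mod 2 = 1) by (clear - HC C1 C2; Z.to_euclidean_division_equations; lia).
    split; [clear - Hx; Z.to_euclidean_division_equations; lia|].
    split; [clear - Hy; Z.to_euclidean_division_equations; lia|].
    split; [apply Z.mod_1_r|]. rewrite Z.div_1_r.
    pose proof (odd_sq_div (x/2)) as D1. pose proof (odd_sq_div (y/2)) as D2. pose proof (odd_sq_div z) as D3.
    unfold Ppsi in *. rewrite Ox, Oy, Oz in *. specialize (D1 eq_refl). specialize (D2 eq_refl). specialize (D3 eq_refl).
    unfold T3P, Ppsi, Pphi, Epsi, Ephi. cbn [fst snd]. rewrite Ox, Oy, Oz. cbn [Z.eqb andb]. apply Z.eqb_eq.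
    remember (x / 2) as X. remember (y / 2) as Y.
    remember ((X * X - 1) / 8) as U. remember ((Y * Y - 1) / 8) as V. remember ((z * z - 1) / 8) as W.
    clear - H Hx Hy Ha Hb D1 D2 D3. unfold M in *. subst x y a b. zcast. nia.
  - intros u v w H. unfold T3P, Ppsi, Pphi, Epsi, Ephi in H. cbn [fst snd andb] in H. rewrite ?Bool.andb_true_r in H.
    apply andb_prop in H as [H E]; apply andb_prop in H as [O1 H]; apply andb_prop in H as [O2 O3].
    apply Z.eqb_eq in O1, O2, O3, E.
    pose proof (odd_sq_div u) as D1. pose proof (odd_sq_div v) as D2. pose proof (odd_sq_div w) as D3.
    unfold Ppsi in *. rewrite O1 in D1; rewrite O2 in D2; rewrite O3 in D3.
    specialize (D1 eq_refl). specialize (D2 eq_refl). specialize (D3 eq_refl).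
    unfold P, NP, Zev, Xm4, M. cbn [fst snd]. rewrite Z.mul_1_l. andsplit.
    + apply Z.eqb_eq. remember ((u * u - 1) / 8) as U. remember ((v * v - 1) / 8) as V.
      remember ((w * w - 1) / 8) as W. clear - E D1 D2 D3 Ha Hb. subst a b. zcast. nia.
    + apply Bool.negb_true_iff, Z.eqb_neq. clear - O3. Z.to_euclidean_division_equations; lia.
    + apply Bool.negb_true_iff, Z.eqb_neq. clear - O1. Z.to_euclidean_division_equations; lia.
Qed.

Lemma E4_p3 : cnt (fun t => P t && Zev t && negb (Xodd t) && Xm4 2 t) (NL M) =
  T3 Ppsi (Epsi (4*a) 0) Pphi (Ephi (6*a) 0) Pphi (Ephi (2*b) a1) n.
Proof.
  apply (piece_bij _ _ _ _ _ _ _ _ _ 2 4 2); try lia.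
  - apply NoDup_NL.
  - intros t Ht. apply andb_prop in Ht as [Ht _]. apply andb_prop in Ht as [Ht _].
    apply andb_prop in Ht as [Ht _]. apply NL_in in Ht; auto; lia.
  - apply valid_psi; lia.
  - apply valid_phi; lia.
  - apply valid_phi; lia.
  - intros x y z H. unfold Zev, Xm4, Xodd in H. cbn [fst snd] in H.
    apply andb_prop in H as [H C3]; apply andb_prop in H as [H C2]; apply andb_prop in H as [H C1].
    apply Bool.negb_true_iff in C2. apply Z.eqb_eq in C1, C3; apply Z.eqb_neq in C2.
    pose proof (E4_class x y z H) as HC. apply NP_eq in H.
    assert (Hx : x = 2 * (x / 2)) by (clear - HC C1 C2 C3; Z.to_euclidean_division_equations; lia).
    assert (Hy : y = 4 * (y / 4)) by (clear - HC C1 C2 C3; Z.to_euclidean_division_equations; lia).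
    assert (Hz : z = 2 * (z / 2)) by (clear - HC C1 C2 C3; Z.to_euclidean_division_equations; lia).
    assert (Ox : (x / 2) mod 2 = 1) by (clear - HC C1 C2 C3; Z.to_euclidean_division_equations; lia).
    split; [clear - Hx; Z.to_euclidean_division_equations; lia|].
    split; [clear - Hy; Z.to_euclidean_division_equations; lia|].
    split; [clear - Hz; Z.to_euclidean_division_equations; lia|].
    pose proof (odd_sq_div (x/2)) as D1. unfold Ppsi in *.
    rewrite Ox in *. specialize (D1 eq_refl).
    unfold T3P, Ppsi, Pphi, Epsi, Ephi. cbn [fst snd]. rewrite Ox. cbn [Z.eqb andb]. apply Z.eqb_eq.
    remember (x / 2) as X. remember (y / 4) as Y. remember (z / 2) as W.
    remember ((X * X - 1) / 8) as U.
    clear - H Hx Hy Hz Ha Hb D1. unfold M in *. subst x y z a b. zcast. nia.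
  - intros u v w H. unfold T3P, Ppsi, Pphi, Epsi, Ephi in H. cbn [fst snd andb] in H. rewrite ?Bool.andb_true_r in H.
    apply andb_prop in H as [O1 E]; apply Z.eqb_eq in O1, E.
    pose proof (odd_sq_div u) as D1. unfold Ppsi in *.
    rewrite O1 in D1. specialize (D1 eq_refl).
    unfold P, NP, Zev, Xm4, Xodd, M. cbn [fst snd]. andsplit.
    + apply Z.eqb_eq. remember ((u * u - 1) / 8) as U.
      clear - E D1 Ha Hb. subst a b. zcast. nia.
    + apply Z.eqb_eq. Z.to_euclidean_division_equations; lia.
    + apply Bool.negb_true_iff, Z.eqb_neq. Z.to_euclidean_division_equations; lia.
    + apply Z.eqb_eq. clear - O1. Z.to_euclidean_division_equations; lia.
Qed.

Lemma E4_p4 : cnt (fun t => P t && Zev t && negb (Xodd t) && negb (Xm4 2 t)) (NL M) =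
  T3 Pphi (Ephi (2*a) 0) Ppsi (Epsi (12*a) 0) Pphi (Ephi (2*b) (a + a1)) n.
Proof.
  apply (piece_bij _ _ _ _ _ _ _ _ _ 4 2 2); try lia.
  - apply NoDup_NL.
  - intros t Ht. apply andb_prop in Ht as [Ht _]. apply andb_prop in Ht as [Ht _].
    apply andb_prop in Ht as [Ht _]. apply NL_in in Ht; auto; lia.
  - apply valid_phi; lia.
  - apply valid_psi; lia.
  - apply valid_phi; lia.
  - intros x y z H. unfold Zev, Xm4, Xodd in H. cbn [fst snd] in H.
    apply andb_prop in H as [H C3]; apply andb_prop in H as [H C2]; apply andb_prop in H as [H C1].
    apply Bool.negb_true_iff in C2, C3. apply Z.eqb_eq in C1; apply Z.eqb_neq in C2, C3.
    pose proof (E4_class x y z H) as HC. apply NP_eq in H.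
    assert (Hx : x = 4 * (x / 4)) by (clear - HC C1 C2 C3; Z.to_euclidean_division_equations; lia).
    assert (Hy : y = 2 * (y / 2)) by (clear - HC C1 C2 C3; Z.to_euclidean_division_equations; lia).
    assert (Hz : z = 2 * (z / 2)) by (clear - HC C1 C2 C3; Z.to_euclidean_division_equations; lia).
    assert (Oy : (y / 2) mod 2 = 1) by (clear - HC C1 C2 C3; Z.to_euclidean_division_equations; lia).
    split; [clear - Hx; Z.to_euclidean_division_equations; lia|].
    split; [clear - Hy; Z.to_euclidean_division_equations; lia|].
    split; [clear - Hz; Z.to_euclidean_division_equations; lia|].
    pose proof (odd_sq_div (y/2)) as D1. unfold Ppsi in *.
    rewrite Oy in *. specialize (D1 eq_refl).
    unfold T3P, Ppsi, Pphi, Epsi, Ephi. cbn [fst snd]. rewrite Oy. cbn [Z.eqb andb]. apply Z.eqb_eq.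
    remember (x / 4) as X. remember (y / 2) as Y. remember (z / 2) as W.
    remember ((Y * Y - 1) / 8) as U.
    clear - H Hx Hy Hz Ha Hb D1. unfold M in *. subst x y z a b. zcast. nia.
  - intros u v w H. unfold T3P, Ppsi, Pphi, Epsi, Ephi in H. cbn [fst snd andb] in H. rewrite ?Bool.andb_true_r in H.
    apply andb_prop in H as [O1 E]; apply Z.eqb_eq in O1, E.
    pose proof (odd_sq_div v) as D1. unfold Ppsi in *.
    rewrite O1 in D1. specialize (D1 eq_refl).
    unfold P, NP, Zev, Xm4, Xodd, M. cbn [fst snd]. andsplit.
    + apply Z.eqb_eq. remember ((v * v - 1) / 8) as U.
      clear - E D1 Ha Hb. subst a b. zcast. nia.
    + apply Z.eqb_eq. Z.to_euclidean_division_equations; lia.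
    + apply Bool.negb_true_iff, Z.eqb_neq. Z.to_euclidean_division_equations; lia.
    + apply Bool.negb_true_iff, Z.eqb_neq. Z.to_euclidean_division_equations; lia.
Qed.

Definition F4 (N z : Z) := Z.eqb (Z.of_nat M) (Z.of_nat a * N + Z.of_nat (4*b) * (z*z)) && Z.leb 0 N && Z.eqb (z mod 2) 0.

Lemma F4_bound N z : F4 N z = true -> 0 <= N <= Z.of_nat M /\ Z.abs z <= Z.of_nat M.
Proof. unfold F4. intros H. bex. subst a b. zcast. nia. Qed.

Lemma E4_OO : cnt (fun t => P t && Zev t && Xodd t) (NL M) = cnt (OOp F4) (NL M).
Proof.
  apply cnt_ext_in. intros [[x y] z] _. apply Bool.eq_iff_eq_true. split; intros H.
  - apply andb_prop in H as [H C2]; apply andb_prop in H as [H C1].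
    pose proof (E4_class x y z H) as HC. apply NP_eq in H. unfold Zev, Xodd in C1, C2.
    cbn [fst snd] in C1, C2. bex. unfold OOp, F4, nrm. cbn [fst snd]. andsplit.
    + apply Z.eqb_eq. rewrite H. zcast. ring.
    + apply Z.leb_le. nia.
    + apply Z.eqb_eq. auto.
    + apply Z.eqb_eq. auto.
    + apply Z.eqb_eq. clear - HC C1 C2. Z.to_euclidean_division_equations; lia.
  - unfold OOp, F4, nrm in H. cbn [fst snd] in H. bex.
    unfold P, NP, Zev, Xodd. cbn [fst snd]. andsplit.
    + apply Z.eqb_eq. rewrite H. zcast. ring.
    + apply Z.eqb_eq. auto.
    + apply Z.eqb_eq. auto.
Qed.

Lemma E4_EE : cnt (fun t => P t && Zev t && negb (Xodd t)) (NL M) = cnt (EEp F4) (NL M).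
Proof.
  apply cnt_ext_in. intros [[x y] z] _. apply Bool.eq_iff_eq_true. split; intros H.
  - apply andb_prop in H as [H C2]; apply andb_prop in H as [H C1].
    pose proof (E4_class x y z H) as HC. apply NP_eq in H. unfold Zev, Xodd in C1, C2.
    cbn [fst snd] in C1, C2. bex.
    assert (Hn : nrm x y mod 8 = 4).
    { destruct (nrm_decomp x y) as [S HS]. rewrite HS.
      assert (x mod 4 = 2 /\ y mod 4 = 0 \/ x mod 4 = 0 /\ y mod 4 = 2) as [[-> ->]|[-> ->]]
        by (clear - HC C1 C2; Z.to_euclidean_division_equations; lia);
      Z.to_euclidean_division_equations; lia. }
    unfold EEp, F4. cbn [fst snd]. rewrite Hn. unfold nrm. andsplit.
    + apply Z.eqb_eq. rewrite H. zcast. ring.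
    + apply Z.leb_le. nia.
    + apply Z.eqb_eq. auto.
    + apply Z.eqb_eq. clear - HC C1 C2. Z.to_euclidean_division_equations; lia.
    + apply Z.eqb_eq. clear - HC C1 C2. Z.to_euclidean_division_equations; lia.
  - unfold EEp, F4, nrm in H. cbn [fst snd] in H. bex.
    unfold P, NP, Zev, Xodd. cbn [fst snd]. andsplit.
    + apply Z.eqb_eq. rewrite H. zcast. ring.
    + apply Z.eqb_eq. auto.
    + apply Bool.negb_true_iff, Z.eqb_neq. lia.
Qed.

Lemma E4_total : cnt P (NL M) =
  (T3 Pphi (Ephi (2*a) 0) Pphi (Ephi (6*a) 0) Ppsi (Epsi (4*b) c) n +
   T3 Ppsi (Epsi (4*a) 0) Ppsi (Epsi (12*a) 0) Ppsi (Epsi (4*b) (2*a + c)) n +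
   3 * (T3 Ppsi (Epsi (4*a) 0) Pphi (Ephi (6*a) 0) Pphi (Ephi (2*b) a1) n +
        T3 Pphi (Ephi (2*a) 0) Ppsi (Epsi (12*a) 0) Pphi (Ephi (2*b) (a + a1)) n))%nat.
Proof.
  rewrite (cnt_split P Zev). rewrite (cnt_split (fun t => P t && negb (Zev t)) (Xm4 0)).
  rewrite (cnt_split (fun t => P t && Zev t) Xodd).
  rewrite E4_p1, E4_p2, E4_OO, (eis M F4 F4_bound), <- E4_EE.
  rewrite (cnt_split (fun t => P t && Zev t && negb (Xodd t)) (Xm4 2)).
  rewrite E4_p3, E4_p4. lia.
Qed.
End E4.

End MH.
Import MH.

Module MI.

Lemma good3 P1 E1 P2 E2 P3 E3 q V1 V2 V3 :
  validF P1 E1 -> validF P2 E2 -> validF P3 E3 ->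
  good (fcoef P1 E1) q V1 -> good (fcoef P2 E2) q V2 -> good (fcoef P3 E3) q V3 ->
  good (T3 P1 E1 P2 E2 P3 E3) q (Cmult V1 (Cmult V2 V3)).
Proof.
  intros W1 W2 W3 G1 G2 G3. eapply good_ext; [|apply good_conv; [exact G1|apply good_conv; [exact G2|exact G3]]].
  intros n. apply conv3; auto.
Qed.

Lemma is_series_val (u : nat -> C) V W : V = W -> is_series u V -> is_series u W.
Proof. intros ->; auto. Qed.

Lemma RtoC4 : RtoC 4 = Cmult (RtoC 2) (RtoC 2).
Proof. rewrite <- RtoC_mult. f_equal. Qed.
Lemma RtoC12 : RtoC 12 = Cmult (RtoC 3) (Cmult (RtoC 2) (RtoC 2)).
Proof. rewrite <- !RtoC_mult. f_equal; lra. Qed.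
Lemma RtoC8 : RtoC 8 = Cmult (RtoC 2) (Cmult (RtoC 2) (RtoC 2)).
Proof. rewrite <- !RtoC_mult. f_equal; lra. Qed.
Lemma RtoC6 : RtoC 6 = Cmult (RtoC 3) (RtoC 2).
Proof. rewrite <- !RtoC_mult. f_equal; lra. Qed.

Lemma even_part (a b : nat) (q : C) :
  (0 < a)%nat -> (0 < b)%nat -> Nat.Odd a -> Cmod q < 1 -> Nat.Even b ->
     is_series
       (fun n => Cmult (RtoC (INR (Nrep a (3 * a) (4 * b) (8 * n + 5 * a)))) (Cpow q n))
       (Cmult (Cmult (Cmult (RtoC 4) (Cpow q a))
                     (Cmult (rpsi (Cpow q a)) (rpsi (Cpow q (12 * a)))))
              (rphi (Cpow q (b / 2))))
   /\
     is_series
       (fun n => Cmult (RtoC (INR (Nrep a (3 * a) (4 * b) (8 * n + 7 * a)))) (Cpow q n))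
       (Cmult (Cmult (RtoC 4) (Cmult (rpsi (Cpow q (3 * a))) (rpsi (Cpow q (4 * a)))))
              (rphi (Cpow q (b / 2)))).
Proof.
  intros Ha Hb [a1 Ha1] Hq [c Hc].
  assert (Hbc : (b / 2 = c)%nat) by (subst b; rewrite Nat.mul_comm, Nat.div_mul; lia).
  rewrite Hbc. assert (Hc1 : (1 <= c)%nat) by lia.
  split.
  - assert (G := good3 _ _ _ _ _ _ q _ _ _ (valid_psi a a ltac:(lia)) (valid_psi (12*a) 0 ltac:(lia))
                  (valid_phi c 0 Hc1) (gpsi a a q ltac:(lia) Hq) (gpsi (12*a) 0 q ltac:(lia) Hq) (gphi c 0 q Hc1 Hq)).
    eapply good_ext in G; [|intros n; symmetry; apply (E1_count a b a1 c n); auto].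
    destruct G as [G _]. eapply is_series_val; [|exact G].
    change (?x = ?y) with (@eq C x y). rewrite RtoC4. cbn [Cpow]. ring.
  - assert (G := good3 _ _ _ _ _ _ q _ _ _ (valid_psi (4*a) 0 ltac:(lia)) (valid_psi (3*a) 0 ltac:(lia))
                  (valid_phi c 0 Hc1) (gpsi (4*a) 0 q ltac:(lia) Hq) (gpsi (3*a) 0 q ltac:(lia) Hq) (gphi c 0 q Hc1 Hq)).
    eapply good_ext in G; [|intros n; symmetry; apply (E2_count a b a1 c n); auto].
    destruct G as [G _]. eapply is_series_val; [|exact G].
    change (?x = ?y) with (@eq C x y). rewrite RtoC4. cbn [Cpow]. ring.
Qed.

Lemma RtoC_INR3 : RtoC (INR 3) = RtoC 3.
Proof. f_equal. simpl. lra. Qed.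

Lemma odd_part (a b : nat) (q : C) :
  (0 < a)%nat -> (0 < b)%nat -> Nat.Odd a -> Cmod q < 1 -> Nat.Odd b ->
     is_series
       (fun n => Cmult (RtoC (INR (Nrep a (3 * a) (4 * b) (8 * n)))) (Cpow q n))
       (Cplus (Cplus
          (Cmult (Cmult (rphi (Cpow q (2 * a))) (rphi (Cpow q (6 * a)))) (rphi (Cpow q (2 * b))))
          (Cmult (Cmult (Cmult (RtoC 4) (Cpow q (2 * a)))
                        (Cmult (rpsi (Cpow q (4 * a))) (rpsi (Cpow q (12 * a)))))
                 (rphi (Cpow q (2 * b)))))
          (Cmult (Cmult (Cmult (RtoC 12) (Cpow q ((a + b) / 2)))
                        (Cplus (Cmult (rphi (Cpow q (6 * a))) (rpsi (Cpow q (4 * a))))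
                               (Cmult (Cpow q a)
                                      (Cmult (rphi (Cpow q (2 * a))) (rpsi (Cpow q (12 * a)))))))
                 (rpsi (Cpow q (4 * b)))))
   /\
     is_series
       (fun n => Cmult (RtoC (INR (Nrep a (3 * a) (4 * b) (8 * n + 4)))) (Cpow q n))
       (Cplus (Cplus
          (Cmult (Cmult (Cmult (RtoC 2) (Cpow q ((b - 1) / 2)))
                        (Cmult (rphi (Cpow q (2 * a))) (rphi (Cpow q (6 * a)))))
                 (rpsi (Cpow q (4 * b))))
          (Cmult (Cmult (Cmult (RtoC 8) (Cpow q (2 * a + (b - 1) / 2)))
                        (Cmult (rpsi (Cpow q (4 * a))) (rpsi (Cpow q (12 * a)))))
                 (rpsi (Cpow q (4 * b)))))
          (Cmult (Cmult (Cmult (RtoC 6) (Cpow q ((a - 1) / 2)))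
                        (Cplus (Cmult (rphi (Cpow q (6 * a))) (rpsi (Cpow q (4 * a))))
                               (Cmult (Cpow q a)
                                      (Cmult (rphi (Cpow q (2 * a))) (rpsi (Cpow q (12 * a)))))))
                 (rphi (Cpow q (2 * b))))).
Proof.
  intros Ha Hb [a1 Ha1] Hq [c Hc].
  assert (E1 : ((a + b) / 2 = a1 + c + 1)%nat).
  { subst a b. replace (2 * a1 + 1 + (2 * c + 1))%nat with ((a1 + c + 1) * 2)%nat by ring.
    apply Nat.div_mul; lia. }
  assert (E2 : ((b - 1) / 2 = c)%nat).
  { subst b. replace (2 * c + 1 - 1)%nat with (c * 2)%nat by lia. apply Nat.div_mul; lia. }
  assert (E3 : ((a - 1) / 2 = a1)%nat).
  { subst a. replace (2 * a1 + 1 - 1)%nat with (a1 * 2)%nat by lia. apply Nat.div_mul; lia. }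
  rewrite E1, E2, E3.
  split.
  - assert (G1 := good3 _ _ _ _ _ _ q _ _ _ (valid_phi (2*a) 0 ltac:(lia)) (valid_phi (6*a) 0 ltac:(lia))
                  (valid_phi (2*b) 0 ltac:(lia)) (gphi (2*a) 0 q ltac:(lia) Hq) (gphi (6*a) 0 q ltac:(lia) Hq)
                  (gphi (2*b) 0 q ltac:(lia) Hq)).
    assert (G2 := good3 _ _ _ _ _ _ q _ _ _ (valid_psi (4*a) (2*a) ltac:(lia)) (valid_psi (12*a) 0 ltac:(lia))
                  (valid_phi (2*b) 0 ltac:(lia)) (gpsi (4*a) (2*a) q ltac:(lia) Hq) (gpsi (12*a) 0 q ltac:(lia) Hq)
                  (gphi (2*b) 0 q ltac:(lia) Hq)).
    assert (G3 := good3 _ _ _ _ _ _ q _ _ _ (valid_psi (4*a) 0 ltac:(lia)) (valid_phi (6*a) 0 ltac:(lia))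
                  (valid_psi (4*b) (a1 + c + 1) ltac:(lia)) (gpsi (4*a) 0 q ltac:(lia) Hq) (gphi (6*a) 0 q ltac:(lia) Hq)
                  (gpsi (4*b) (a1 + c + 1) q ltac:(lia) Hq)).
    assert (G4 := good3 _ _ _ _ _ _ q _ _ _ (valid_phi (2*a) 0 ltac:(lia)) (valid_psi (12*a) 0 ltac:(lia))
                  (valid_psi (4*b) (a + (a1 + c + 1)) ltac:(lia)) (gphi (2*a) 0 q ltac:(lia) Hq) (gpsi (12*a) 0 q ltac:(lia) Hq)
                  (gpsi (4*b) (a + (a1 + c + 1)) q ltac:(lia) Hq)).
    assert (G := good_plus _ _ _ _ _ (good_plus _ _ _ _ _ G1 G2) (good_scale 3 _ _ _ (good_plus _ _ _ _ _ G3 G4))).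
    eapply good_ext in G; [|intros n; cbv beta; rewrite Nrep_cnt, (E3_total a b a1 c n Ha1 Hc); reflexivity].
    destruct G as [G _]. eapply is_series_val; [|exact G].
    change (?x = ?y) with (@eq C x y). rewrite RtoC12, RtoC4, RtoC_INR3. cbn [Cpow].
    rewrite (Cpow_add_r q a (a1 + c + 1)). ring.
  - assert (G1 := good3 _ _ _ _ _ _ q _ _ _ (valid_phi (2*a) 0 ltac:(lia)) (valid_phi (6*a) 0 ltac:(lia))
                  (valid_psi (4*b) c ltac:(lia)) (gphi (2*a) 0 q ltac:(lia) Hq) (gphi (6*a) 0 q ltac:(lia) Hq)
                  (gpsi (4*b) c q ltac:(lia) Hq)).
    assert (G2 := good3 _ _ _ _ _ _ q _ _ _ (valid_psi (4*a) 0 ltac:(lia)) (valid_psi (12*a) 0 ltac:(lia))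
                  (valid_psi (4*b) (2*a + c) ltac:(lia)) (gpsi (4*a) 0 q ltac:(lia) Hq) (gpsi (12*a) 0 q ltac:(lia) Hq)
                  (gpsi (4*b) (2*a + c) q ltac:(lia) Hq)).
    assert (G3 := good3 _ _ _ _ _ _ q _ _ _ (valid_psi (4*a) 0 ltac:(lia)) (valid_phi (6*a) 0 ltac:(lia))
                  (valid_phi (2*b) a1 ltac:(lia)) (gpsi (4*a) 0 q ltac:(lia) Hq) (gphi (6*a) 0 q ltac:(lia) Hq)
                  (gphi (2*b) a1 q ltac:(lia) Hq)).
    assert (G4 := good3 _ _ _ _ _ _ q _ _ _ (valid_phi (2*a) 0 ltac:(lia)) (valid_psi (12*a) 0 ltac:(lia))
                  (valid_phi (2*b) (a + a1) ltac:(lia)) (gphi (2*a) 0 q ltac:(lia) Hq) (gpsi (12*a) 0 q ltac:(lia) Hq)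
                  (gphi (2*b) (a + a1) q ltac:(lia) Hq)).
    assert (G := good_plus _ _ _ _ _ (good_plus _ _ _ _ _ G1 G2) (good_scale 3 _ _ _ (good_plus _ _ _ _ _ G3 G4))).
    eapply good_ext in G; [|intros n; cbv beta; rewrite Nrep_cnt, (E4_total a b a1 c n Ha1 Hc); reflexivity].
    destruct G as [G _]. eapply is_series_val; [|exact G].
    change (?x = ?y) with (@eq C x y). rewrite RtoC8, RtoC6, RtoC_INR3. cbn [Cpow].
    rewrite !Cpow_add_r. ring.
Qed.

End MI.
Import MI.

Theorem lemma4p2 (a b : nat) (q : C) :
  (0 < a)%nat -> (0 < b)%nat -> Nat.Odd a -> Cmod q < 1 ->
  (Nat.Even b ->
     is_series
       (fun n => Cmult (RtoC (INR (Nrep a (3 * a) (4 * b) (8 * n + 5 * a)))) (Cpow q n))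
       (Cmult (Cmult (Cmult (RtoC 4) (Cpow q a))
                     (Cmult (rpsi (Cpow q a)) (rpsi (Cpow q (12 * a)))))
              (rphi (Cpow q (b / 2))))
   /\
     is_series
       (fun n => Cmult (RtoC (INR (Nrep a (3 * a) (4 * b) (8 * n + 7 * a)))) (Cpow q n))
       (Cmult (Cmult (RtoC 4) (Cmult (rpsi (Cpow q (3 * a))) (rpsi (Cpow q (4 * a)))))
              (rphi (Cpow q (b / 2)))))
  /\
  (Nat.Odd b ->
     is_series
       (fun n => Cmult (RtoC (INR (Nrep a (3 * a) (4 * b) (8 * n)))) (Cpow q n))
       (Cplus (Cplus
          (Cmult (Cmult (rphi (Cpow q (2 * a))) (rphi (Cpow q (6 * a)))) (rphi (Cpow q (2 * b))))
          (Cmult (Cmult (Cmult (RtoC 4) (Cpow q (2 * a)))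
                        (Cmult (rpsi (Cpow q (4 * a))) (rpsi (Cpow q (12 * a)))))
                 (rphi (Cpow q (2 * b)))))
          (Cmult (Cmult (Cmult (RtoC 12) (Cpow q ((a + b) / 2)))
                        (Cplus (Cmult (rphi (Cpow q (6 * a))) (rpsi (Cpow q (4 * a))))
                               (Cmult (Cpow q a)
                                      (Cmult (rphi (Cpow q (2 * a))) (rpsi (Cpow q (12 * a)))))))
                 (rpsi (Cpow q (4 * b)))))
   /\
     is_series
       (fun n => Cmult (RtoC (INR (Nrep a (3 * a) (4 * b) (8 * n + 4)))) (Cpow q n))
       (Cplus (Cplus
          (Cmult (Cmult (Cmult (RtoC 2) (Cpow q ((b - 1) / 2)))
                        (Cmult (rphi (Cpow q (2 * a))) (rphi (Cpow q (6 * a)))))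
                 (rpsi (Cpow q (4 * b))))
          (Cmult (Cmult (Cmult (RtoC 8) (Cpow q (2 * a + (b - 1) / 2)))
                        (Cmult (rpsi (Cpow q (4 * a))) (rpsi (Cpow q (12 * a)))))
                 (rpsi (Cpow q (4 * b)))))
          (Cmult (Cmult (Cmult (RtoC 6) (Cpow q ((a - 1) / 2)))
                        (Cplus (Cmult (rphi (Cpow q (6 * a))) (rpsi (Cpow q (4 * a))))
                               (Cmult (Cpow q a)
                                      (Cmult (rphi (Cpow q (2 * a))) (rpsi (Cpow q (12 * a)))))))
                 (rphi (Cpow q (2 * b)))))).
Proof.
  intros Ha Hb Hoa Hq. split; intros Hbp.
  - apply even_part; auto.
  - apply odd_part; auto.
Qed.
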